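(* Let $X\sim p$ be a continuous random variable with a piecewise continuous density $p$ such that $H([X]_1)<\infty$, $\int_{\mathbb R}p(x)|\log p(x)|\,dx<\infty$ and $\operatorname{ess\,sup}_x p(x)=L<\infty$. Then for every real sequence $(c_m)_{m\ge1}$, $$\lim_{m\to\infty}\big(H([X+c_m]_m)-\log m\big)=h(X).$$
   Context: For $m>0$, $[x]_m=\frac1m\lfloor\frac12+mx\rfloor$; $H$ is discrete entropy and $h$ differential entropy (natural log). *)

(* Defs.v *)
From Stdlib Require Import Reals Lra ZArith List ClassicalEpsilon.
Open Scope R_scope.

Definition is_RInt (f : R -> R) (a b : R) (v : R) : Prop :=
  exists pr : Riemann_integrable f a b, RiemannInt pr = v.

(* total version (meaningful only when f is Riemann integrable on [a,b]) *)
Definition RInt (f : R -> R) (a b : R) : R :=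
  epsilon (inhabits 0) (fun v => is_RInt f a b v).

Definition locally_integrable (f : R -> R) : Prop :=
  forall a b, a <= b -> exists v, is_RInt f a b v.

(* improper integral over R (via symmetric truncations; used only for
   nonnegative / absolutely integrable integrands) *)
Definition integral_R_is (f : R -> R) (v : R) : Prop :=
  locally_integrable f /\ Un_cv (fun n => RInt f (- INR n) (INR n)) v.

Definition integrable_R (f : R -> R) : Prop := exists v, integral_R_is f v.

Definition piecewise_continuous (p : R -> R) : Prop :=
  (forall a b, a < b -> exists D : list R,
      forall x, a < x < b -> ~ In x D -> continuity_pt p x) /\
  (forall x, (exists l, limit1_in p (fun y => x < y) l x) /\
             (exists l, limit1_in p (fun y => y < x) l x)).

Definition is_density (p : R -> R) : Prop :=
  (forall x, 0 <= p x) /\ integral_R_is p 1.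

(* ess sup p < oo : for piecewise continuous p this amounts to a bound at
   all continuity points *)
Definition ess_bounded (p : R -> R) : Prop :=
  exists L : R, forall x, continuity_pt p x -> p x <= L.

(* [x]_m = (1/m) floor(1/2 + m x).  [X + c]_m = k/m  iff
   (k - 1/2)/m - c <= X < (k + 1/2)/m - c. *)
Definition quant (m x : R) : R := IZR (Int_part (/2 + m * x)) / m.

Definition bin_prob (p : R -> R) (m c : R) (k : Z) : R :=
  RInt p ((IZR k - /2) / m - c) ((IZR k + /2) / m - c).

(* discrete entropy (natural log, 0 log 0 = 0 since ln 0 = 0 in Stdlib)
   of a distribution P on Z: the (nonnegative-term) series over Z *)
Definition ent_term (P : Z -> R) (k : Z) : R := - (P k * ln (P k)).

Definition disc_entropy_is (P : Z -> R) (v : R) : Prop :=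
  infinite_sum (fun n => ent_term P (Z.of_nat n) + ent_term P (- Z.of_nat n - 1)%Z) v.

Definition H_quant_is (p : R -> R) (m c : R) (v : R) : Prop :=
  disc_entropy_is (bin_prob p m c) v.

Definition diff_entropy_is (p : R -> R) (v : R) : Prop :=
  integral_R_is (fun x => p x * ln (p x)) (- v).

(* Main.v *)
Require Import Defs.
From Stdlib Require Import Reals Lra Lia ZArith List ClassicalEpsilon FunctionalExtensionality Classical RList RiemannInt_SF RiemannInt.
Open Scope R_scope.

Definition Ig (f : R -> R) (a b : R) : Prop := inhabited (Riemann_integrable f a b).

Lemma RInt_eq f a b (pr : Riemann_integrable f a b) : RInt f a b = RiemannInt pr.
Proof.
  unfold RInt.
  assert (H : exists v, is_RInt f a b v) by (exists (RiemannInt pr); exists pr; reflexivity).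
  destruct (epsilon_spec (inhabits 0) (fun v => is_RInt f a b v) H) as [pr' E].
  rewrite <- E. apply RiemannInt_P5.
Qed.

Lemma Ig_ext f g a b : (forall x, Rmin a b <= x <= Rmax a b -> f x = g x) -> Ig f a b -> Ig g a b.
Proof. intros E [pr]. constructor. exact (@Riemann_integrable_ext f g a b E pr). Qed.

Lemma RInt_ext f g a b : a <= b -> (forall x, a <= x <= b -> f x = g x) -> Ig f a b -> RInt f a b = RInt g a b.
Proof.
  intros ab E [pr].
  assert (E' : forall x, Rmin a b <= x <= Rmax a b -> f x = g x).
  { intros x Hx. rewrite Rmin_left in Hx by lra. rewrite Rmax_right in Hx by lra. apply E; lra. }
  pose (pr2 := @Riemann_integrable_ext f g a b E' pr).
  rewrite (RInt_eq _ _ _ pr), (RInt_eq _ _ _ pr2).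
  apply RiemannInt_P18; auto. intros; apply E; lra.
Qed.

Lemma Ig_comb f g a b l : Ig f a b -> Ig g a b -> Ig (fun x => f x + l * g x) a b.
Proof. intros [p1] [p2]; constructor; apply RiemannInt_P10; auto. Qed.

Lemma Ig_const a b k : Ig (fun _ => k) a b.
Proof. constructor. exact (RiemannInt_P14 a b k). Qed.

Lemma Ig_abs f a b : Ig f a b -> Ig (fun x => Rabs (f x)) a b.
Proof. intros [p]; constructor; apply RiemannInt_P16; auto. Qed.

Lemma Ig_sub f a b c d : a <= c -> c <= d -> d <= b -> Ig f a b -> Ig f c d.
Proof.
  intros h1 h2 h3 [p]. constructor.
  apply (RiemannInt_P23 (RiemannInt_P22 p (conj (Rle_trans _ _ _ h1 h2) h3))). lra.
Qed.

Lemma Ig_chasles f a b c : Ig f a b -> Ig f b c -> Ig f a c.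
Proof. intros [p1] [p2]; constructor; eapply RiemannInt_P24; eauto. Qed.

Lemma RInt_chasles f a b c : Ig f a b -> Ig f b c -> RInt f a b + RInt f b c = RInt f a c.
Proof.
  intros [p1] [p2]. pose (p3 := RiemannInt_P24 p1 p2).
  rewrite (RInt_eq _ _ _ p1), (RInt_eq _ _ _ p2), (RInt_eq _ _ _ p3). apply RiemannInt_P26.
Qed.

Lemma RInt_comb f g a b l : Ig f a b -> Ig g a b -> RInt (fun x => f x + l * g x) a b = RInt f a b + l * RInt g a b.
Proof.
  intros [p1] [p2]. pose (p3 := RiemannInt_P10 l p1 p2).
  rewrite (RInt_eq _ _ _ p1), (RInt_eq _ _ _ p2), (RInt_eq _ _ _ p3). apply RiemannInt_P13.
Qed.

Lemma RInt_const a b k : RInt (fun _ => k) a b = k * (b - a).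
Proof.
  change (fun _ : R => k) with (fct_cte k).
  rewrite (RInt_eq _ _ _ (RiemannInt_P14 a b k)). apply RiemannInt_P15.
Qed.

Lemma RInt_le f g a b : a <= b -> Ig f a b -> Ig g a b -> (forall x, a <= x <= b -> f x <= g x) -> RInt f a b <= RInt g a b.
Proof.
  intros ab [p1] [p2] H. rewrite (RInt_eq _ _ _ p1), (RInt_eq _ _ _ p2).
  apply RiemannInt_P19; auto. intros; apply H; lra.
Qed.

Lemma RInt_abs_le f a b : a <= b -> Ig f a b -> Rabs (RInt f a b) <= RInt (fun x => Rabs (f x)) a b.
Proof.
  intros ab [p1]. pose (p2 := RiemannInt_P16 p1).
  rewrite (RInt_eq _ _ _ p1), (RInt_eq _ _ _ p2). apply RiemannInt_P17; auto.
Qed.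

Lemma RInt_ge0 f a b : a <= b -> Ig f a b -> (forall x, a <= x <= b -> 0 <= f x) -> 0 <= RInt f a b.
Proof.
  intros ab I H. replace 0 with (RInt (fun _ => 0) a b) by (rewrite RInt_const; ring).
  apply RInt_le; auto. apply Ig_const.
Qed.

Lemma RInt_opp f a b : Ig f a b -> RInt (fun x => - f x) a b = - RInt f a b.
Proof.
  intros I. transitivity (RInt (fun x => 0 + (-1) * f x) a b).
  - f_equal. apply functional_extensionality. intro; ring.
  - rewrite RInt_comb; [|apply Ig_const|auto]. rewrite RInt_const. ring.
Qed.

Lemma RInt_scal f a b k : Ig f a b -> RInt (fun x => k * f x) a b = k * RInt f a b.
Proof.
  intros I. transitivity (RInt (fun x => 0 + k * f x) a b).
  - f_equal. apply functional_extensionality. intro; ring.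
  - rewrite RInt_comb; [|apply Ig_const|auto]. rewrite RInt_const. ring.
Qed.

Lemma Ig_scal f a b k : Ig f a b -> Ig (fun x => k * f x) a b.
Proof. intros I. apply Ig_ext with (fun x => 0 + k * f x). intros; ring. apply Ig_comb; auto. apply Ig_const. Qed.

Lemma Ig_plus f g a b : Ig f a b -> Ig g a b -> Ig (fun x => f x + g x) a b.
Proof. intros I J. apply Ig_ext with (fun x => f x + 1 * g x). intros; ring. apply Ig_comb; auto. Qed.

Lemma RInt_plus f g a b : Ig f a b -> Ig g a b -> RInt (fun x => f x + g x) a b = RInt f a b + RInt g a b.
Proof.
  intros I J. transitivity (RInt (fun x => f x + 1 * g x) a b).
  - f_equal. apply functional_extensionality. intro; ring.
  - rewrite RInt_comb; auto. ring.
Qed.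

Lemma pos_Rl_map (g : R -> R) (l : list R) i : (i < length l)%nat -> pos_Rl (map g l) i = g (pos_Rl l i).
Proof.
  revert i; induction l as [|x l IH]; intros i Hi; simpl in *. lia.
  destruct i; auto. apply IH. lia.
Qed.

Lemma IsStepFun_comp (g : R -> R) a b (phi : StepFun a b) : IsStepFun (fun x => g (phi x)) a b.
Proof.
  destruct (pre phi) as [l [lf [H1 [H2 [H3 [H4 H5]]]]]].
  exists l. exists (map g lf). split; [|split; [|split; [|split]]]; auto.
  - rewrite length_map. auto.
  - intros i Hi x Hx. simpl. rewrite (H5 i Hi x Hx). rewrite pos_Rl_map; auto.
    rewrite H4 in Hi. simpl in Hi. auto.
Qed.

Lemma Ig_comp f g a b M :
  a <= b ->
  (forall u, Rabs (g u) <= M) ->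
  (forall eps, 0 < eps -> exists del, 0 < del /\ forall u v, Rabs (u - v) < del -> Rabs (g u - g v) <= eps) ->
  Ig f a b -> Ig (fun x => g (f x)) a b.
Proof.
  intros ab HM Hu [pr]. constructor. intro eps.
  pose (w := b - a + 1).
  assert (wpos : 0 < w) by (unfold w; lra).
  assert (e1pos : 0 < eps / (2 * w)) by (apply Rdiv_lt_0_compat; [apply cond_pos|lra]).
  destruct (constructive_indefinite_description _ (Hu _ e1pos)) as [del [delpos Hdel]].
  assert (M0 : 0 <= M) by (apply Rle_trans with (Rabs (g 0)); [apply Rabs_pos|auto]).
  pose (K := 2 * M / del).
  assert (K0 : 0 <= K) by (unfold K; apply Rmult_le_pos; [lra|left; apply Rinv_0_lt_compat; auto]).
  assert (e2pos : 0 < eps / (2 * (K + 1))) by (apply Rdiv_lt_0_compat; [apply cond_pos|lra]).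
  destruct (pr (mkposreal _ e2pos)) as [phi [psi [Hp Hi]]].
  exists (mkStepFun (IsStepFun_comp g a b phi)).
  exists (mkStepFun (StepFun_P28 K (mkStepFun (StepFun_P4 a b (eps / (2 * w)))) psi)).
  split.
  - intros t Ht. simpl. unfold fct_cte.
    specialize (Hp t Ht).
    destruct (Rlt_or_le (Rabs (f t - phi t)) del) as [Hl|Hl].
    + specialize (Hdel _ _ Hl).
      assert (0 <= K * psi t) by (apply Rmult_le_pos; auto; apply Rle_trans with (Rabs (f t - phi t)); auto; apply Rabs_pos).
      lra.
    + assert (Rabs (g (f t) - g (phi t)) <= 2 * M).
      { unfold Rminus. apply Rle_trans with (Rabs (g (f t)) + Rabs (- g (phi t))). apply Rabs_triang.
        rewrite Rabs_Ropp. pose proof (HM (f t)). pose proof (HM (phi t)). lra. }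
      assert (2 * M <= K * psi t).
      { unfold K. apply Rle_trans with (2 * M / del * del).
        right. field. lra.
        apply Rmult_le_compat_l; auto. lra. }
      lra.
  - rewrite StepFun_P30, StepFun_P18. simpl in Hi.
    apply Rle_lt_trans with (Rabs (eps / (2 * w) * (b - a)) + Rabs (K * RiemannInt_SF psi)).
    apply Rabs_triang.
    rewrite Rabs_mult, Rabs_mult, (Rabs_right (eps / (2*w))), (Rabs_right (b - a)), (Rabs_right K) by lra.
    assert (eps / (2 * w) * (b - a) < eps / 2).
    { unfold w. apply Rlt_le_trans with (eps / (2 * (b - a + 1)) * (b - a + 1)).
      apply Rmult_lt_compat_l; auto; lra. right; field; lra. }
    assert (K * Rabs (RiemannInt_SF psi) <= K * (eps / (2 * (K + 1)))) by (apply Rmult_le_compat_l; lra).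
    assert (K * (eps / (2 * (K + 1))) < eps / 2).
    { replace (K * (eps / (2 * (K + 1)))) with (eps / 2 * (K / (K + 1))) by (field; lra).
      pose proof (cond_pos eps).
      rewrite <- (Rmult_1_r (eps/2)) at 2. apply Rmult_lt_compat_l. lra.
      apply (Rmult_lt_reg_r (K+1)). lra. unfold Rdiv. rewrite Rmult_assoc, Rinv_l by lra. lra. }
    lra.
Qed.

Definition phi (t : R) : R := t * ln t.

Lemma ln_le_sub1 x : 0 < x -> ln x <= x - 1.
Proof. intros H. pose proof (exp_ineq1_le (ln x)). rewrite exp_ln in H0; lra. Qed.

Lemma ln_nonpos x : x <= 1 -> ln x <= 0.
Proof.
  intros H. destruct (Rlt_or_le 0 x) as [h|h].
  - pose proof (ln_le_sub1 x h). lra.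
  - unfold ln. destruct (Rlt_dec 0 x); [exfalso; lra|lra].
Qed.

Lemma ln_nonneg x : 1 <= x -> 0 <= ln x.
Proof.
  intros H. destruct (Req_dec x 1) as [->|n]. rewrite ln_1; lra.
  left. rewrite <- ln_1. apply ln_increasing; lra.
Qed.

Lemma ln_le_mono x y : 0 < x -> x <= y -> ln x <= ln y.
Proof. intros h1 h2. destruct (Req_dec x y) as [->|n]. lra. left; apply ln_increasing; lra. Qed.

Lemma phi_tangent t a : 0 <= t -> 0 < a -> phi a + (1 + ln a) * (t - a) <= phi t.
Proof.
  intros ht ha. unfold phi. destruct (Req_dec t 0) as [->|tn].
  - replace (0 * ln 0) with 0 by ring. ring_simplify. lra.
  - assert (tp : 0 < t) by lra.
    pose proof (ln_le_sub1 (a / t)) as L.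
    assert (0 < a / t) by (apply Rdiv_lt_0_compat; lra).
    specialize (L H). unfold Rdiv in L. rewrite ln_mult, ln_Rinv in L by (try apply Rinv_0_lt_compat; lra).
    apply (Rmult_le_compat_l t) in L; [|lra].
    replace (t * (a * / t - 1)) with (a - t) in L by (field; lra).
    nra.
Qed.

Lemma phi_ge_m1 t : 0 <= t -> -1 <= phi t.
Proof. intros ht. pose proof (phi_tangent t 1 ht Rlt_0_1). unfold phi in *. rewrite ln_1 in H. lra. Qed.

Lemma phi_le_0 t : 0 <= t <= 1 -> phi t <= 0.
Proof. intros [h1 h2]. unfold phi. pose proof (ln_nonpos t h2). nra. Qed.

Lemma phi_le_B t B : 1 <= B -> 0 <= t <= B -> phi t <= B * ln B.
Proof.
  intros HB [h1 h2]. pose proof (ln_nonneg B HB).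
  destruct (Rle_or_lt t 1) as [h|h].
  - pose proof (phi_le_0 t (conj h1 h)). nra.
  - unfold phi. pose proof (ln_le_mono t B ltac:(lra) h2). pose proof (ln_nonneg t ltac:(lra)). nra.
Qed.

Lemma phi_abs_B t B : 1 <= B -> 0 <= t <= B -> Rabs (phi t) <= 1 + B * ln B.
Proof.
  intros HB Ht. pose proof (phi_le_B t B HB Ht). pose proof (phi_ge_m1 t (proj1 Ht)).
  pose proof (ln_nonneg B HB). assert (0 <= B * ln B) by nra.
  apply Rabs_le; lra.
Qed.

Lemma psi_subadd a b : 0 <= a -> 0 <= b -> - phi (a + b) <= - phi a - phi b.
Proof.
  intros ha hb. unfold phi.
  destruct (Req_dec a 0) as [->|na]. rewrite Rplus_0_l. replace (0 * ln 0) with 0 by ring. lra.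
  destruct (Req_dec b 0) as [->|nb]. rewrite Rplus_0_r. replace (0 * ln 0) with 0 by ring. lra.
  assert (ln a <= ln (a + b)) by (apply ln_le_mono; lra).
  assert (ln b <= ln (a + b)) by (apply ln_le_mono; lra).
  nra.
Qed.

Lemma ln_quarter t : 0 < t <= /4 -> ln t <= -1.
Proof.
  intros [h1 h2]. pose proof ln_lt_2.
  assert (ln t <= ln (/4)) by (apply ln_le_mono; lra).
  rewrite ln_Rinv in H0 by lra. replace 4 with (2 * 2) in H0 by ring.
  rewrite ln_mult in H0 by lra. lra.
Qed.

Lemma psi_mono s t : 0 <= s <= t -> t <= /4 -> - phi t <= - phi s -> False \/ True.
Proof. right; auto. Qed.

Lemma psi_mono' s t : 0 <= s <= t -> t <= /4 -> - phi s <= - phi t.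
Proof.
  intros [h1 h2] h3. destruct (Req_dec t 0) as [->|tn].
  assert (s = 0) by lra. subst; lra.
  pose proof (phi_tangent s t h1 ltac:(lra)).
  pose proof (ln_quarter t ltac:(lra)).
  assert ((1 + ln t) * (s - t) >= 0) by nra. lra.
Qed.

Lemma psi_nonneg t : 0 <= t <= 1 -> 0 <= - phi t.
Proof. intros H. pose proof (phi_le_0 t H). lra. Qed.

Lemma phi_cont_pos x : 0 < x -> continuity_pt phi x.
Proof.
  intros hx. unfold phi. change (fun t => t * ln t) with (id * ln)%F.
  apply continuity_pt_mult. apply derivable_continuous_pt. apply derivable_pt_id.
  apply derivable_continuous_pt. exists (/ x). apply derivable_pt_lim_ln; auto.
Qed.

Lemma phi_small t : 0 < t < 1 -> Rabs (phi t) <= 2 * sqrt t.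
Proof.
  intros [h1 h2].
  assert (st : 0 < sqrt t) by (apply sqrt_lt_R0; lra).
  assert (E : ln t = 2 * ln (sqrt t)).
  { rewrite <- (sqrt_sqrt t) at 1 by lra. rewrite ln_mult by lra. ring. }
  pose proof (ln_le_sub1 (/ sqrt t) ltac:(apply Rinv_0_lt_compat; lra)).
  rewrite ln_Rinv in H by lra.
  assert (ln t <= 0) by (apply ln_nonpos; lra).
  unfold phi. rewrite Rabs_left1 by nra.
  assert (- ln t <= 2 / sqrt t) by (unfold Rdiv; lra).
  apply Rle_trans with (t * (2 / sqrt t)). nra.
  right. rewrite <- (sqrt_sqrt t) at 1 by lra. field. lra.
Qed.

Lemma phi_nonpos_arg t : t <= 0 -> phi t = 0.
Proof. intros h. unfold phi, ln. destruct (Rlt_dec 0 t); [exfalso; lra|ring]. Qed.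

Lemma phi_cont_0 : continuity_pt phi 0.
Proof.
  intros eps heps. exists (Rmin 1 (eps / 2 * (eps / 2))). split.
  - apply Rmin_pos; [lra|]. nra.
  - intros x [_ hx]. simpl in *. unfold R_dist in *. rewrite Rminus_0_r in hx.
    rewrite (phi_nonpos_arg 0) by lra. rewrite Rminus_0_r.
    destruct (Rle_or_lt x 0) as [h|h].
    + rewrite phi_nonpos_arg, Rabs_R0 by auto. auto.
    + rewrite Rabs_right in hx by lra.
      assert (x < 1) by (apply Rlt_le_trans with (1 := hx); apply Rmin_l).
      assert (x < eps / 2 * (eps / 2)) by (apply Rlt_le_trans with (1 := hx); apply Rmin_r).
      apply Rle_lt_trans with (1 := phi_small x ltac:(lra)).
      assert (sqrt x < eps / 2).
      { rewrite <- (sqrt_square (eps/2)) by lra. apply sqrt_lt_1; lra. }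
      lra.
Qed.

Lemma phi_cont x : 0 <= x -> continuity_pt phi x.
Proof. intros h. destruct (Req_dec x 0) as [->|n]. apply phi_cont_0. apply phi_cont_pos; lra. Qed.

Definition clamp (B u : R) : R := Rmin B (Rmax 0 u).

Lemma clamp_range B u : 0 <= B -> 0 <= clamp B u <= B.
Proof. intros. unfold clamp. split. apply Rmin_glb; auto. apply Rmax_l. apply Rmin_l. Qed.

Lemma clamp_id B u : 0 <= u <= B -> clamp B u = u.
Proof. intros. unfold clamp. rewrite Rmax_right by lra. apply Rmin_right; lra. Qed.

Lemma clamp_lip B u v : 0 <= B -> Rabs (clamp B u - clamp B v) <= Rabs (u - v).
Proof.
  intros hB. unfold clamp, Rmin, Rmax.
  repeat match goal with |- context [Rle_dec ?a ?b] => destruct (Rle_dec a b)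
                       | H : context [Rle_dec ?a ?b] |- _ => destruct (Rle_dec a b) end;
  unfold Rabs; repeat match goal with |- context [Rcase_abs ?a] => destruct (Rcase_abs a) end; lra.
Qed.

Lemma gB_unif B : 1 <= B -> forall eps, 0 < eps -> exists del, 0 < del /\
  forall u v, Rabs (u - v) < del -> Rabs (phi (clamp B u) - phi (clamp B v)) <= eps.
Proof.
  intros hB eps he.
  destruct (@Heine_cor2 phi 0 B (fun x hx => phi_cont x (proj1 hx)) (mkposreal eps he)) as [del Hd].
  exists del. split. apply cond_pos. intros u v huv.
  left. apply Hd; try (apply clamp_range; lra).
  apply Rle_lt_trans with (2 := huv). apply clamp_lip; lra.
Qed.

Lemma gB_bound B u : 1 <= B -> Rabs (phi (clamp B u)) <= 1 + B * ln B.
Proof. intros hB. apply phi_abs_B; auto. apply clamp_range; lra. Qed.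

Lemma Ig_phi f a b B : a <= b -> 1 <= B -> (forall x, a <= x <= b -> 0 <= f x <= B) -> Ig f a b ->
  Ig (fun x => phi (f x)) a b.
Proof.
  intros ab hB hf I.
  apply Ig_ext with (fun x => phi (clamp B (f x))).
  - intros x Hx. rewrite Rmin_left, Rmax_right in Hx by lra. rewrite clamp_id; auto.
  - apply (Ig_comp f (fun u => phi (clamp B u)) a b (1 + B * ln B) ab); auto.
    intro; apply gB_bound; auto. apply gB_unif; auto.
Qed.

Lemma Rabs_le_inv x a : Rabs x <= a -> - a <= x <= a.
Proof. unfold Rabs; destruct (Rcase_abs x); intros; lra. Qed.

Lemma lim_le_ev (u : nat -> R) l b N : Un_cv u l -> (forall n, (N <= n)%nat -> u n <= b) -> l <= b.
Proof.
  intros Hu Hb. destruct (Rle_or_lt l b) as [h|h]; auto.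
  destruct (Hu (l - b) ltac:(lra)) as [N' HN'].
  specialize (HN' (max N N') ltac:(lia)). specialize (Hb (max N N') ltac:(lia)).
  unfold Rdist in HN'. apply Rabs_def2 in HN'. lra.
Qed.

Lemma lim_ge_ev (u : nat -> R) l b N : Un_cv u l -> (forall n, (N <= n)%nat -> b <= u n) -> b <= l.
Proof.
  intros Hu Hb. destruct (Rle_or_lt b l) as [h|h]; auto.
  destruct (Hu (b - l) ltac:(lra)) as [N' HN'].
  specialize (HN' (max N N') ltac:(lia)). specialize (Hb (max N N') ltac:(lia)).
  unfold Rdist in HN'. apply Rabs_def2 in HN'. lra.
Qed.

Lemma nat_big (x : R) : exists n : nat, x <= INR n.
Proof. destruct (INR_unbounded x) as [n Hn]. exists n; lra. Qed.

Definition locint (f : R -> R) : Prop := forall a b, a <= b -> Ig f a b.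

Lemma locint_Ig f a b : locint f -> a <= b -> Ig f a b.
Proof. auto. Qed.

Lemma RInt_split3 f a u v b : locint f -> a <= u -> u <= v -> v <= b ->
  RInt f a b = RInt f a u + RInt f u v + RInt f v b.
Proof.
  intros I h1 h2 h3.
  rewrite (RInt_chasles f a u v) by (apply I; lra).
  rewrite RInt_chasles by (apply I; lra). reflexivity.
Qed.

Definition Gf (f : R -> R) (n : nat) := RInt f (- INR n) (INR n).

Lemma INR_ge0 n : 0 <= INR n.
Proof. apply pos_INR. Qed.

Lemma sub_le_G f u v n : locint f -> (forall x, 0 <= f x) -> - INR n <= u -> u <= v -> v <= INR n ->
  RInt f u v <= Gf f n.
Proof.
  intros I Hp h1 h2 h3. unfold Gf. rewrite (RInt_split3 f (- INR n) u v (INR n)) by auto.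
  assert (0 <= RInt f (- INR n) u) by (apply RInt_ge0; auto; apply I; lra).
  assert (0 <= RInt f v (INR n)) by (apply RInt_ge0; auto; apply I; lra).
  lra.
Qed.

Lemma Gf_mono f n n' : locint f -> (forall x, 0 <= f x) -> (n <= n')%nat -> Gf f n <= Gf f n'.
Proof.
  intros I Hp h. apply le_INR in h. pose proof (INR_ge0 n). apply sub_le_G; auto; lra.
Qed.

Lemma Gf_le f V n : locint f -> (forall x, 0 <= f x) -> Un_cv (Gf f) V -> Gf f n <= V.
Proof.
  intros I Hp Hc. apply growing_ineq; auto. intro k. apply Gf_mono; auto.
Qed.

Lemma RInt_le_V f V u v : locint f -> (forall x, 0 <= f x) -> Un_cv (Gf f) V -> u <= v -> RInt f u v <= V.
Proof.
  intros I Hp Hc h. destruct (nat_big (Rmax (Rabs u) (Rabs v))) as [n Hn].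
  apply Rle_trans with (Gf f n). apply sub_le_G; auto.
  - assert (Rabs u <= INR n) by (apply Rle_trans with (2 := Hn); apply Rmax_l). apply Rabs_le_inv in H; lra.
  - assert (Rabs v <= INR n) by (apply Rle_trans with (2 := Hn); apply Rmax_r). apply Rabs_le_inv in H; lra.
  - apply Gf_le; auto.
Qed.

Lemma RInt_outside f V (N : nat) u v : locint f -> (forall x, 0 <= f x) -> Un_cv (Gf f) V ->
  u <= - INR N -> INR N <= v -> RInt f u (- INR N) + RInt f (INR N) v <= V - Gf f N.
Proof.
  intros I Hp Hc h1 h2. pose proof (INR_ge0 N).
  pose proof (RInt_le_V f V u v I Hp Hc ltac:(lra)).
  rewrite (RInt_split3 f u (- INR N) (INR N) v) in H0 by (auto; lra).
  unfold Gf. lra.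
Qed.

Lemma improper_abs f Va : locint f -> Un_cv (Gf (fun x => Rabs (f x))) Va ->
  exists I, Un_cv (Gf f) I /\
  forall (N : nat) u v, u <= - INR N -> INR N <= v -> Rabs (RInt f u v - I) <= Va - Gf (fun x => Rabs (f x)) N.
Proof.
  intros If Hc.
  set (g := fun x => Rabs (f x)).
  assert (Ig' : locint g) by (intros a b h; apply Ig_abs; auto).
  assert (gp : forall x, 0 <= g x) by (intro; apply Rabs_pos).
  assert (key : forall (N n : nat) u v, u <= - INR N -> INR N <= v -> - INR n <= u -> v <= INR n ->
     Rabs (Gf f n - RInt f u v) <= Va - Gf g N).
  { intros N n u v h1 h2 h3 h4. pose proof (INR_ge0 N).
    unfold Gf. rewrite (RInt_split3 f (- INR n) u v (INR n)) by (auto; lra).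
    replace (RInt f (- INR n) u + RInt f u v + RInt f v (INR n) - RInt f u v) with
      (RInt f (- INR n) u + RInt f v (INR n)) by ring.
    apply Rle_trans with (Rabs (RInt f (- INR n) u) + Rabs (RInt f v (INR n))). apply Rabs_triang.
    assert (Rabs (RInt f (- INR n) u) <= RInt g (- INR n) u) by (apply RInt_abs_le; [lra| apply If; lra]).
    assert (Rabs (RInt f v (INR n)) <= RInt g v (INR n)) by (apply RInt_abs_le; [lra| apply If; lra]).
    pose proof (RInt_split3 g (- INR n) u v (INR n) Ig' h3 ltac:(lra) h4).
    pose proof (RInt_split3 g u (- INR N) (INR N) v Ig' h1 ltac:(lra) h2).
    pose proof (RInt_le_V g Va (- INR n) (INR n) Ig' gp Hc ltac:(lra)).
    assert (0 <= RInt g u (- INR N)) by (apply RInt_ge0; auto; apply Ig'; lra).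
    assert (0 <= RInt g (INR N) v) by (apply RInt_ge0; auto; apply Ig'; lra).
    unfold Gf. lra. }
  assert (Cau : Cauchy_crit (Gf f)).
  { intros eps he. destruct (Hc eps he) as [N HN].
    exists N. intros n m hn hm. unfold Rdist.
    assert (forall a b, (N <= a)%nat -> (a <= b)%nat -> Rabs (Gf f b - Gf f a) < eps).
    { intros a b ha hb. apply Rle_lt_trans with (Va - Gf g N).
      apply le_INR in ha. apply le_INR in hb. apply key; lra.
      specialize (HN N (le_n N)). change (Rdist (Gf g N) Va < eps) in HN. unfold Rdist in HN. apply Rabs_def2 in HN. lra. }
    destruct (Nat.le_ge_cases n m).
    + rewrite Rabs_minus_sym. apply H; lia.
    + apply H; lia. }
  destruct (R_complete _ Cau) as [I HI]. exists I. split; auto.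
  intros N u v h1 h2.
  destruct (nat_big (Rmax (Rabs u) (Rabs v))) as [n0 Hn0].
  assert (Hle : forall n, (n0 <= n)%nat -> Rabs (Gf f n - RInt f u v) <= Va - Gf g N).
  { intros n hn. apply le_INR in hn.
    assert (Rabs u <= INR n0) by (apply Rle_trans with (2 := Hn0); apply Rmax_l).
    assert (Rabs v <= INR n0) by (apply Rle_trans with (2 := Hn0); apply Rmax_r).
    apply Rabs_le_inv in H. apply Rabs_le_inv in H0.
    apply key; auto; lra. }
  rewrite Rabs_minus_sym. apply Rabs_le.
  split.
  - apply (lim_ge_ev (fun n => Gf f n - RInt f u v) _ _ n0).
    + intros eps he. destruct (HI eps he) as [N1 HN1]. exists N1. intros n hn.
      unfold Rdist. replace (Gf f n - RInt f u v - (I - RInt f u v)) with (Gf f n - I) by ring. apply HN1; auto.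
    + intros n hn. specialize (Hle n hn). apply Rabs_le_inv in Hle. lra.
  - apply (lim_le_ev (fun n => Gf f n - RInt f u v) _ _ n0).
    + intros eps he. destruct (HI eps he) as [N1 HN1]. exists N1. intros n hn.
      unfold Rdist. replace (Gf f n - RInt f u v - (I - RInt f u v)) with (Gf f n - I) by ring. apply HN1; auto.
    + intros n hn. specialize (Hle n hn). apply Rabs_le_inv in Hle. lra.
Qed.

Fixpoint ZS (T : Z -> R) (A : Z) (n : nat) : R :=
  match n with O => 0 | S n => ZS T A n + T (A + Z.of_nat n)%Z end.

Lemma ZS_add T A n1 n2 : ZS T A (n1 + n2) = ZS T A n1 + ZS T (A + Z.of_nat n1)%Z n2.
Proof.
  induction n2 as [|n2 IH]. simpl. rewrite Nat.add_0_r. ring.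
  rewrite Nat.add_succ_r. simpl. rewrite IH.
  replace (A + Z.of_nat (n1 + n2))%Z with (A + Z.of_nat n1 + Z.of_nat n2)%Z by lia. ring.
Qed.

Lemma ZS_cons T A n : ZS T A (S n) = T A + ZS T (A + 1)%Z n.
Proof.
  replace (S n) with (1 + n)%nat by lia. rewrite ZS_add. simpl. rewrite Z.add_0_r. ring.
Qed.

Lemma ZS_le T U A n : (forall i, (i < n)%nat -> T (A + Z.of_nat i)%Z <= U (A + Z.of_nat i)%Z) -> ZS T A n <= ZS U A n.
Proof.
  induction n as [|n IH]; intros H; simpl. lra.
  apply Rplus_le_compat. apply IH; intros; apply H; lia. apply H; lia.
Qed.

Lemma ZS_nonneg T A n : (forall k, 0 <= T k) -> 0 <= ZS T A n.
Proof. induction n; simpl; intros H. lra. specialize (IHn H). specialize (H (A + Z.of_nat n)%Z). lra. Qed.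

Lemma ZS_plus T U A n : ZS (fun k => T k + U k) A n = ZS T A n + ZS U A n.
Proof. induction n; simpl. ring. rewrite IHn. ring. Qed.

Lemma ZS_scal a T A n : ZS (fun k => a * T k) A n = a * ZS T A n.
Proof. induction n; simpl. ring. rewrite IHn. ring. Qed.

Lemma ZS_const a A n : ZS (fun _ => a) A n = INR n * a.
Proof. induction n. simpl. ring. change (ZS (fun _ => a) A (S n)) with (ZS (fun _ => a) A n + a). rewrite IHn. rewrite S_INR. ring. Qed.

Lemma ZS_ext T U A n : (forall k, T k = U k) -> ZS T A n = ZS U A n.
Proof. intros H. induction n; simpl; auto. rewrite IHn, H. auto. Qed.

Lemma ZS_telescope F A n : ZS (fun k => F (k + 1)%Z - F k) A n = F (A + Z.of_nat n)%Z - F A.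
Proof.
  induction n; simpl. rewrite Z.add_0_r. ring.
  rewrite IHn. replace (A + Z.pos (Pos.of_succ_nat n))%Z with (A + Z.of_nat n + 1)%Z by lia. ring.
Qed.

Lemma ZS_S T A n : ZS T A (S n) = ZS T A n + T (A + Z.of_nat n)%Z.
Proof. reflexivity. Qed.

Lemma pair_sum T N : sum_f_R0 (fun n => T (Z.of_nat n) + T (- Z.of_nat n - 1)%Z) N =
  ZS T (- Z.of_nat (S N))%Z (2 * S N).
Proof.
  induction N as [|N IH].
  - simpl. replace (-1 + 1)%Z with 0%Z by lia. replace (-1+0)%Z with (-1)%Z by lia. ring.
  - rewrite tech5. rewrite IH.
    replace (2 * S (S N))%nat with (S (S (2 * S N)))%nat by lia.
    rewrite ZS_cons. rewrite ZS_S.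
    replace (- Z.of_nat (S (S N)) + 1)%Z with (- Z.of_nat (S N))%Z by lia.
    replace (- Z.of_nat (S N) + Z.of_nat (2 * S N))%Z with (Z.of_nat (S N)) by lia.
    replace (- Z.of_nat (S (S N)))%Z with (- Z.of_nat (S N) - 1)%Z by lia.
    ring.
Qed.

Lemma div_nonneg a b : 0 <= a -> 0 < b -> 0 <= a / b.
Proof. intros. unfold Rdiv. apply Rmult_le_pos; auto. left; apply Rinv_0_lt_compat; auto. Qed.

Definition lo (M c : R) (k : Z) : R := (IZR k - /2) / M - c.
Definition Pk (p : R -> R) M c k := RInt p (lo M c k) (lo M c (k + 1)).
Definition ek p M c k := - (Pk p M c k * ln (M * Pk p M c k)).
Definition fk p M c k := RInt (fun x => phi (p x)) (lo M c k) (lo M c (k + 1)).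

Lemma lo_S M c k : 0 < M -> lo M c (k + 1) = lo M c k + / M.
Proof. intros. unfold lo. rewrite plus_IZR. field. lra. Qed.

Lemma lo_add M c k n : 0 < M -> lo M c (k + Z.of_nat n) = lo M c k + INR n / M.
Proof. intros. unfold lo. rewrite plus_IZR, <- INR_IZR_INZ. field. lra. Qed.

Lemma lo_lt M c k : 0 < M -> lo M c k < lo M c (k + 1).
Proof. intros. rewrite lo_S by auto. pose proof (Rinv_0_lt_compat M H). lra. Qed.

Lemma lo_mono M c k n : 0 < M -> lo M c k <= lo M c (k + Z.of_nat n).
Proof. intros. rewrite lo_add by auto. pose proof (pos_INR n). assert (0 <= INR n / M) by (apply div_nonneg; lra). lra. Qed.

Lemma bin_prob_Pk p M c k : bin_prob p M c k = Pk p M c k.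
Proof. unfold bin_prob, Pk, lo. rewrite plus_IZR. replace (IZR k + 1 - /2) with (IZR k + /2) by field. reflexivity. Qed.

Lemma ZS_bin f M c A n : 0 < M -> locint f ->
  ZS (fun k => RInt f (lo M c k) (lo M c (k + 1))) A n = RInt f (lo M c A) (lo M c (A + Z.of_nat n)).
Proof.
  intros HM If. induction n as [|n IH].
  - simpl. rewrite Z.add_0_r.
    destruct (If (lo M c A) (lo M c A) (Rle_refl _)) as [pr]. rewrite (RInt_eq _ _ _ pr).
    symmetry. apply RiemannInt_P9.
  - rewrite ZS_S, IH. replace (A + Z.of_nat (S n))%Z with (A + Z.of_nat n + 1)%Z by lia.
    apply RInt_chasles; apply If. apply lo_mono; auto. left; apply lo_lt; auto.
Qed.

Definition dens_ok (p : R -> R) := (forall x, 0 <= p x) /\ locint p /\ Un_cv (Gf p) 1.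

Lemma Pk_nonneg p M c k : dens_ok p -> 0 < M -> 0 <= Pk p M c k.
Proof. intros [h1 [h2 h3]] HM. apply RInt_ge0; auto. left; apply lo_lt; auto. apply h2. left; apply lo_lt; auto. Qed.

Lemma Pk_le1 p M c k : dens_ok p -> 0 < M -> Pk p M c k <= 1.
Proof. intros [h1 [h2 h3]] HM. apply RInt_le_V; auto. left; apply lo_lt; auto. Qed.

Lemma ent_decomp p M c k : dens_ok p -> 0 < M ->
  ent_term (Pk p M c) k = ek p M c k + Pk p M c k * ln M.
Proof.
  intros D HM. unfold ent_term, ek. pose proof (Pk_nonneg p M c k D HM).
  destruct (Req_dec (Pk p M c k) 0) as [E|E].
  - rewrite E. ring.
  - rewrite ln_mult by lra. ring.
Qed.

Lemma ent_nonneg p M c k : dens_ok p -> 0 < M -> 0 <= ent_term (Pk p M c) k.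
Proof.
  intros D HM. unfold ent_term. apply psi_nonneg. split. apply Pk_nonneg; auto. apply Pk_le1; auto.
Qed.

(* Jensen *)
Lemma jensen p M c k : dens_ok p -> 0 < M -> locint (fun x => phi (p x)) ->
  0 <= ek p M c k + fk p M c k.
Proof.
  intros D HM Ip. pose proof D as [h1 [h2 h3]].
  set (u := lo M c k). set (v := lo M c (k + 1)).
  assert (uv : u < v) by (apply lo_lt; auto).
  assert (vu : v - u = / M) by (unfold u, v; rewrite lo_S; auto; ring).
  set (P := Pk p M c k).
  assert (PE : P = RInt p u v) by reflexivity.
  assert (P0 : 0 <= P) by (apply Pk_nonneg; auto).
  assert (tb : forall a, 0 < a -> phi a / M + (1 + ln a) * (P - a / M) <= fk p M c k).
  { intros a ha. unfold fk. fold u v.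
    assert (RInt (fun x => phi a + (1 + ln a) * (p x - a)) u v <= RInt (fun x => phi (p x)) u v).
    { apply RInt_le. lra.
      apply Ig_ext with (fun x => (phi a - (1 + ln a) * a) + (1 + ln a) * p x). intros; ring.
      apply Ig_comb. apply Ig_const. apply h2; lra.
      apply Ip; lra.
      intros x _. apply phi_tangent; auto. }
    replace (RInt (fun x => phi a + (1 + ln a) * (p x - a)) u v) with
      ((phi a - (1 + ln a) * a) * (v - u) + (1 + ln a) * P) in H.
    rewrite vu in H. replace (phi a / M + (1 + ln a) * (P - a / M)) with ((phi a - (1 + ln a) * a) * / M + (1 + ln a) * P) by (field; lra). auto.
    rewrite (RInt_ext (fun x => phi a + (1 + ln a) * (p x - a)) (fun x => (phi a - (1 + ln a) * a) + (1 + ln a) * p x)).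
    rewrite RInt_comb, RInt_const, PE. reflexivity. apply Ig_const. apply h2; lra. lra. intros; ring.
    apply Ig_ext with (fun x => (phi a - (1 + ln a) * a) + (1 + ln a) * p x). intros; ring.
    apply Ig_comb. apply Ig_const. apply h2; lra. }
  unfold ek. fold P.
  destruct (Req_dec P 0) as [E|E].
  - rewrite E. replace (0 * ln (M * 0)) with 0 by ring.
    destruct (Rle_or_lt 0 (fk p M c k)) as [F|F]. lra. exfalso.
    set (t := - fk p M c k).
    assert (tp : 0 < t) by (unfold t; lra).
    specialize (tb (t / 2 * M) ltac:(apply Rmult_lt_0_compat; lra)).
    rewrite E in tb. unfold phi in tb.
    replace (t / 2 * M * ln (t / 2 * M) / M + (1 + ln (t / 2 * M)) * (0 - t / 2 * M / M)) with (- (t / 2)) in tb by (field; lra).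
    unfold t in tb. lra.
  - assert (Pp : 0 < P) by lra.
    specialize (tb (M * P) ltac:(apply Rmult_lt_0_compat; lra)).
    unfold phi in tb. replace (M * P * ln (M * P) / M + (1 + ln (M * P)) * (P - M * P / M)) with (P * ln (M * P)) in tb by (field; lra).
    lra.
Qed.

Lemma ek_tangent p M c k t : dens_ok p -> 0 < M -> 0 < t ->
  ek p M c k <= - Pk p M c k * ln t + t / M - Pk p M c k.
Proof.
  intros D HM ht. unfold ek. pose proof (Pk_nonneg p M c k D HM) as P0.
  set (P := Pk p M c k) in *.
  destruct (Req_dec P 0) as [E|E].
  - rewrite E. assert (0 <= t / M) by (apply div_nonneg; lra). replace (0 * ln (M * 0)) with 0 by ring. lra.
  - assert (Pp : 0 < P) by lra.
    assert (MP : 0 < M * P) by (apply Rmult_lt_0_compat; lra).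
    pose proof (ln_le_sub1 (t / (M * P)) ltac:(apply Rdiv_lt_0_compat; lra)).
    unfold Rdiv in H. rewrite ln_mult, ln_Rinv in H by (try apply Rinv_0_lt_compat; lra).
    apply (Rmult_le_compat_l P) in H; [|lra].
    replace (P * (t * / (M * P) - 1)) with (t / M - P) in H by (field; lra).
    lra.
Qed.

Lemma logsum p M c A n : dens_ok p -> 0 < M -> INR n <= M ->
  ZS (ek p M c) A n <= - phi (ZS (Pk p M c) A n).
Proof.
  intros D HM Hn.
  set (S := ZS (Pk p M c) A n).
  assert (S0 : 0 <= S) by (apply ZS_nonneg; intro; apply Pk_nonneg; auto).
  assert (gen : forall t, 0 < t -> ZS (ek p M c) A n <= - S * ln t + INR n * t / M - S).
  { intros t ht. eapply Rle_trans. apply ZS_le with (U := fun k => (- ln t) * Pk p M c k + (t / M + (-1) * Pk p M c k)).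
    intros i _. pose proof (ek_tangent p M c (A + Z.of_nat i) t D HM ht). lra.
    rewrite ZS_plus, ZS_scal, ZS_plus, ZS_const, ZS_scal. fold S. right. field. lra. }
  destruct (Req_dec S 0) as [E|E].
  - rewrite E. unfold phi. rewrite Rmult_0_l, Ropp_0.
    destruct (Rle_or_lt (ZS (ek p M c) A n) 0) as [h|h]; auto. exfalso.
    set (x := ZS (ek p M c) A n) in *.
    pose proof (pos_INR n).
    specialize (gen (x * M / (INR n + 1)) ltac:(apply Rdiv_lt_0_compat; [apply Rmult_lt_0_compat|]; lra)).
    rewrite E in gen. fold x in gen.
    replace (- 0 * ln (x * M / (INR n + 1)) + INR n * (x * M / (INR n + 1)) / M - 0) with (x * (INR n / (INR n + 1))) in gen by (field; lra).
    assert (INR n / (INR n + 1) < 1).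
    { apply (Rmult_lt_reg_r (INR n + 1)). lra. unfold Rdiv. rewrite Rmult_assoc, Rinv_l by lra. lra. }
    nra.
  - assert (Sp : 0 < S) by lra.
    assert (np : 0 < INR n).
    { destruct n. exfalso. apply E. reflexivity. apply lt_0_INR; lia. }
    specialize (gen (M * S / INR n) ltac:(apply Rdiv_lt_0_compat; [apply Rmult_lt_0_compat|]; lra)).
    unfold Rdiv in gen. rewrite ln_mult, ln_mult, ln_Rinv in gen by (try apply Rmult_lt_0_compat; try apply Rinv_0_lt_compat; lra).
    assert (ln (M * / INR n) >= 0).
    { rewrite ln_mult, ln_Rinv by (try apply Rinv_0_lt_compat; lra).
      pose proof (ln_le_mono (INR n) M np Hn). lra. }
    rewrite ln_mult, ln_Rinv in H by (try apply Rinv_0_lt_compat; lra).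
    unfold phi.
    replace (- S * (ln M + ln S + - ln (INR n)) + INR n * (M * S * / INR n) * / M - S)
      with (- (S * ln S) - S * (ln M - ln (INR n))) in gen by (field; lra).
    assert (0 <= S * (ln M - ln (INR n))) by (apply Rmult_le_pos; lra).
    lra.
Qed.

Definition Qc (p : R -> R) (j : Z) := RInt p (IZR j - /2) (IZR j + /2).
Definition psiQ p j := - phi (Qc p j).

Lemma bin_prob_Qc p j : bin_prob p 1 0 j = Qc p j.
Proof. unfold bin_prob, Qc. f_equal; field. Qed.

Lemma RInt_mono_int p u v a b : (forall x, 0 <= p x) -> locint p -> a <= u -> u <= v -> v <= b ->
  RInt p u v <= RInt p a b.
Proof.
  intros h1 h2 H1 H2 H3. rewrite (RInt_split3 p a u v b) by auto.
  assert (0 <= RInt p a u) by (apply RInt_ge0; auto). assert (0 <= RInt p v b) by (apply RInt_ge0; auto). lra.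
Qed.

Lemma Qc2 p j : locint p -> Qc p j + Qc p (j + 1) = RInt p (IZR j - /2) (IZR j + 3/2).
Proof.
  intros I. unfold Qc. rewrite plus_IZR.
  replace (IZR j + 1 - /2) with (IZR j + /2) by field.
  replace (IZR j + 1 + /2) with (IZR j + 3/2) by field.
  apply RInt_chasles; apply I; lra.
Qed.

Lemma Qc_nonneg p j : dens_ok p -> 0 <= Qc p j.
Proof. intros [h1 [h2 h3]]. apply RInt_ge0; auto. lra. apply h2; lra. Qed.

Lemma block_bound p m c A n j : dens_ok p -> (1 <= m)%nat -> (n <= m)%nat ->
  IZR j - /2 <= lo (INR m) c A -> lo (INR m) c (A + Z.of_nat n) <= IZR j + 3/2 ->
  Qc p j + Qc p (j + 1) <= /4 ->
  ZS (ek p (INR m) c) A n <= psiQ p j + psiQ p (j + 1).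
Proof.
  intros D hm hn H1 H2 H3. pose proof D as [d1 [d2 d3]].
  assert (HM : 0 < INR m) by (apply lt_0_INR; lia).
  eapply Rle_trans. apply logsum; auto. apply le_INR; auto.
  unfold Pk. rewrite (ZS_bin p) by auto.
  set (S := RInt p (lo (INR m) c A) (lo (INR m) c (A + Z.of_nat n))).
  assert (S0 : 0 <= S) by (apply RInt_ge0; [apply lo_mono; auto | apply d2; apply lo_mono; auto | auto]).
  assert (SQ : S <= Qc p j + Qc p (j + 1)).
  { rewrite Qc2 by auto. apply RInt_mono_int; auto. apply lo_mono; auto. }
  unfold psiQ.
  pose proof (Qc_nonneg p j D). pose proof (Qc_nonneg p (j+1) D).
  pose proof (psi_mono' S (Qc p j + Qc p (j + 1)) (conj S0 SQ) H3).
  pose proof (psi_subadd (Qc p j) (Qc p (j + 1)) H H0). lra.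
Qed.

Lemma right_tail p m c : dens_ok p -> (1 <= m)%nat -> forall q A r j,
  (r <= m)%nat -> IZR j - /2 <= lo (INR m) c A -> lo (INR m) c A <= IZR j + /2 ->
  (forall j', (j <= j')%Z -> Qc p j' + Qc p (j' + 1) <= /4) ->
  ZS (ek p (INR m) c) A (q * m + r) <= ZS (psiQ p) j (S q) + ZS (psiQ p) (j + 1) (S q).
Proof.
  intros D hm. assert (HM : 0 < INR m) by (apply lt_0_INR; lia).
  induction q as [|q IH]; intros A r j hr h1 h2 HQ.
  - simpl. rewrite !Z.add_0_r. replace (j+1)%Z with (j+1)%Z by reflexivity.
    rewrite !Rplus_0_l. refine (block_bound p m c A r j D hm hr h1 _ _); [|apply HQ; lia].
    rewrite lo_add by auto. assert (INR r / INR m <= 1).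
    { apply (Rmult_le_reg_r (INR m)). auto. unfold Rdiv. rewrite Rmult_assoc, Rinv_l by lra. apply le_INR in hr. lra. }
    lra.
  - replace (S q * m + r)%nat with (m + (q * m + r))%nat by lia.
    rewrite ZS_add.
    rewrite (ZS_cons (psiQ p) j (S q)), (ZS_cons (psiQ p) (j + 1) (S q)).
    assert (E : lo (INR m) c (A + Z.of_nat m) = lo (INR m) c A + 1).
    { rewrite lo_add by auto. field. lra. }
    pose proof (IH (A + Z.of_nat m)%Z r (j + 1)%Z hr) as IH'.
    rewrite E, plus_IZR in IH'.
    assert (B : ZS (ek p (INR m) c) A m <= psiQ p j + psiQ p (j + 1)).
    { apply block_bound; auto. rewrite E. lra. apply HQ; lia. }
    assert (IH2 : ZS (ek p (INR m) c) (A + Z.of_nat m) (q * m + r) <=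
       ZS (psiQ p) (j + 1) (S q) + ZS (psiQ p) (j + 1 + 1) (S q)).
    { apply IH'; try lra. intros j' hj'. apply HQ. lia. }
    lra.
Qed.

Lemma left_tail p m c : dens_ok p -> (1 <= m)%nat -> forall q A r j,
  (r <= m)%nat -> IZR j - /2 <= lo (INR m) c (A + Z.of_nat (r + q * m)) -> lo (INR m) c (A + Z.of_nat (r + q * m)) <= IZR j + /2 ->
  (forall j', (j' <= j)%Z -> Qc p (j' - 1) + Qc p j' <= /4) ->
  ZS (ek p (INR m) c) A (r + q * m) <= ZS (psiQ p) (j - Z.of_nat q - 1) (S q) + ZS (psiQ p) (j - Z.of_nat q) (S q).
Proof.
  intros D hm. assert (HM : 0 < INR m) by (apply lt_0_INR; lia).
  induction q as [|q IH]; intros A r j hr h1 h2 HQ.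
  - simpl. rewrite Nat.add_0_r in *. rewrite !Z.sub_0_r, !Z.add_0_r, !Rplus_0_l.
    replace j with (j - 1 + 1)%Z at 2 by lia.
    apply block_bound; auto.
    + rewrite lo_add in h1, h2 by auto. rewrite minus_IZR.
      assert (INR r / INR m <= 1).
      { apply (Rmult_le_reg_r (INR m)). auto. unfold Rdiv. rewrite Rmult_assoc, Rinv_l by lra. apply le_INR in hr. lra. }
      lra.
    + rewrite minus_IZR. lra.
    + replace (j - 1 + 1)%Z with j by lia. apply HQ. lia.
  - replace (r + S q * m)%nat with (r + q * m + m)%nat in * by lia.
    rewrite ZS_add.
    rewrite (ZS_S (psiQ p) _ (S q)), (ZS_S (psiQ p) (j - Z.of_nat (S q)) (S q)).
    set (E0 := lo (INR m) c (A + Z.of_nat (r + q * m))).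
    assert (E : lo (INR m) c (A + Z.of_nat (r + q * m + m)) = E0 + 1).
    { unfold E0. replace (A + Z.of_nat (r + q * m + m))%Z with (A + Z.of_nat (r + q * m) + Z.of_nat m)%Z by lia.
      rewrite lo_add by auto. field. lra. }
    rewrite E in h1, h2.
    assert (B : ZS (ek p (INR m) c) (A + Z.of_nat (r + q * m)) m <= psiQ p (j - 1) + psiQ p j).
    { assert (Hb := block_bound p m c (A + Z.of_nat (r + q * m)) m (j - 1) D hm (le_n m)).
      replace (j - 1 + 1)%Z with j in Hb by lia. apply Hb.
      - fold E0. rewrite minus_IZR. lra.
      - replace (A + Z.of_nat (r + q * m) + Z.of_nat m)%Z with (A + Z.of_nat (r + q * m + m))%Z by lia.
        rewrite E. rewrite minus_IZR. lra.
      - apply HQ. lia. }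
    assert (IH2 : ZS (ek p (INR m) c) A (r + q * m) <=
       ZS (psiQ p) (j - 1 - Z.of_nat q - 1) (S q) + ZS (psiQ p) (j - 1 - Z.of_nat q) (S q)).
    { apply IH; auto. fold E0. rewrite minus_IZR. lra. fold E0. rewrite minus_IZR. lra.
      intros j' hj'. apply HQ. lia. }
    replace (j - Z.of_nat (S q) - 1)%Z with (j - 1 - Z.of_nat q - 1)%Z by lia.
    replace (j - Z.of_nat (S q))%Z with (j - 1 - Z.of_nat q)%Z by lia.
    replace (j - 1 - Z.of_nat q - 1 + Z.of_nat (S q))%Z with (j - 1)%Z by lia.
    replace (j - 1 - Z.of_nat q + Z.of_nat (S q))%Z with j by lia.
    lra.
Qed.

Lemma ZS_sub T A n A' n' : (forall k, 0 <= T k) -> (A <= A')%Z -> (A' + Z.of_nat n' <= A + Z.of_nat n)%Z ->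
  ZS T A' n' <= ZS T A n.
Proof.
  intros HT h1 h2.
  set (a := Z.to_nat (A' - A)).
  set (r := (n - a - n')%nat).
  assert (En : n = (a + (n' + r))%nat) by (unfold r, a; lia).
  rewrite En, ZS_add, ZS_add.
  replace (A + Z.of_nat a)%Z with A' by (unfold a; lia).
  pose proof (ZS_nonneg T A a HT). pose proof (ZS_nonneg T (A' + Z.of_nat n') r HT). lra.
Qed.

Lemma tail_small T V : (forall k, 0 <= T k) ->
  infinite_sum (fun n => T (Z.of_nat n) + T (- Z.of_nat n - 1)%Z) V ->
  forall eps, 0 < eps -> exists J : nat, forall j0 n,
    ((Z.of_nat J <= j0)%Z \/ (j0 + Z.of_nat n <= - Z.of_nat J)%Z) -> ZS T j0 n <= eps.
Proof.
  intros HT HV eps he.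
  destruct (HV (eps / 2) ltac:(lra)) as [N0 HN0].
  exists (S N0). intros j0 n Hr.
  set (N' := (N0 + Z.to_nat (Z.abs j0) + n)%nat).
  assert (d0 := HN0 N0 (le_n _)). assert (d1 := HN0 N' ltac:(unfold N'; lia)).
  rewrite pair_sum in d0, d1. unfold Rdist in d0, d1.
  apply Rabs_def2 in d0. apply Rabs_def2 in d1.
  set (k := (N' - N0)%nat).
  assert (Edec : ZS T (- Z.of_nat (S N')) (2 * S N') =
     ZS T (- Z.of_nat (S N')) k + ZS T (- Z.of_nat (S N0)) (2 * S N0) + ZS T (Z.of_nat (S N0)) k).
  { replace (2 * S N')%nat with (k + (2 * S N0 + k))%nat by (unfold k, N'; lia).
    rewrite ZS_add, ZS_add.
    replace (- Z.of_nat (S N') + Z.of_nat k)%Z with (- Z.of_nat (S N0))%Z by (unfold k, N'; lia).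
    replace (- Z.of_nat (S N0) + Z.of_nat (2 * S N0))%Z with (Z.of_nat (S N0)) by lia. ring. }
  pose proof (ZS_nonneg T (- Z.of_nat (S N')) k HT).
  pose proof (ZS_nonneg T (Z.of_nat (S N0)) k HT).
  destruct Hr as [Hr|Hr].
  - apply Rle_trans with (ZS T (Z.of_nat (S N0)) k).
    apply ZS_sub; auto. unfold k, N'. lia. lra.
  - apply Rle_trans with (ZS T (- Z.of_nat (S N')) k).
    apply ZS_sub; auto. unfold k, N'. lia. unfold k, N'. lia. lra.
Qed.

Definition maxl (l : list R) : R := fold_right Rmax 0 l.

Lemma maxl_in x l : In x l -> x <= maxl l.
Proof.
  induction l as [|y l IH]; simpl. tauto.
  intros [->|H]. apply Rmax_l. apply Rle_trans with (maxl l). auto. apply Rmax_r.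
Qed.

Lemma p_bound_D (p : R -> R) (L a b : R) (D : list R) :
  (forall x, 0 <= p x) ->
  (forall x, continuity_pt p x -> p x <= L) ->
  (forall x, a < x < b -> ~ In x D -> continuity_pt p x) ->
  forall x, a < x < b -> 0 <= p x <= Rmax 1 (Rmax L (maxl (map p D))).
Proof.
  intros h0 hL hD x hx. split; auto.
  destruct (classic (In x D)) as [i|n].
  - apply Rle_trans with (maxl (map p D)). apply maxl_in. apply in_map; auto.
    eapply Rle_trans; [|apply Rmax_r]. apply Rmax_r.
  - apply Rle_trans with L. apply hL, hD; auto.
    eapply Rle_trans; [|apply Rmax_r]. apply Rmax_l.
Qed.

Lemma Rmax_1 L l : 1 <= Rmax 1 (Rmax L l).
Proof. apply Rmax_l. Qed.

Definition Kset (R1 rho : R) (D : list R) (x : R) : Prop :=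
  - R1 <= x <= R1 /\ forall d, In d D -> rho <= Rabs (x - d).

Lemma Kset_compact R1 rho D : compact (Kset R1 rho D).
Proof.
  apply compact_P5.
  - intros y Hy. unfold complementary in Hy. unfold Kset in Hy.
    destruct (Rlt_or_le y (- R1)) as [h|h].
    + exists (mkposreal (- R1 - y) ltac:(lra)). intros z Hz. unfold disc in Hz. simpl in Hz.
      intros [[Hz1 _] _]. apply Rabs_def2 in Hz. lra.
    + destruct (Rlt_or_le R1 y) as [h'|h'].
      * exists (mkposreal (y - R1) ltac:(lra)). intros z Hz. unfold disc in Hz. simpl in Hz.
        intros [[_ Hz1] _]. apply Rabs_def2 in Hz. lra.
      * assert (exists d, In d D /\ Rabs (y - d) < rho).
        { apply NNPP. intro nex. apply Hy. split. lra. intros d hd.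
          destruct (Rlt_or_le (Rabs (y - d)) rho); auto. exfalso; apply nex; exists d; auto. }
        destruct H as [d [hd hyd]].
        exists (mkposreal (rho - Rabs (y - d)) ltac:(lra)). intros z Hz. unfold disc in Hz. simpl in Hz.
        intros [_ Hk]. specialize (Hk d hd).
        assert (Rabs (z - d) <= Rabs (z - y) + Rabs (y - d)).
        { replace (z - d) with ((z - y) + (y - d)) by ring. apply Rabs_triang. }
        lra.
  - exists (- R1), R1. intros x [h _]. auto.
Qed.

Lemma p_unif_K (p : R -> R) R1 rho D :
  0 < rho ->
  (forall x, - R1 - 1 < x < R1 + 1 -> ~ In x D -> continuity_pt p x) ->
  forall eps, 0 < eps -> exists del, 0 < del /\
    forall x y, Kset R1 rho D x -> Kset R1 rho D y -> Rabs (x - y) < del -> Rabs (p x - p y) < eps.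
Proof.
  intros hr hc eps he.
  assert (U := Heine p (Kset R1 rho D) (Kset_compact R1 rho D)).
  assert (cK : forall x, Kset R1 rho D x -> continuity_pt p x).
  { intros x [hx hd]. apply hc. lra. intro i. specialize (hd x i). rewrite Rminus_diag, Rabs_R0 in hd. lra. }
  destruct (U cK (mkposreal eps he)) as [del Hd].
  exists del. split. apply cond_pos. intros x y hx hy hxy. apply Hd; auto.
Qed.

Lemma clamp_mono B u v : 0 <= B -> u <= v -> clamp B u <= clamp B v.
Proof.
  intros hB h. unfold clamp. apply Rle_min_compat_l. apply Rle_max_compat_l. auto.
Qed.

Lemma count_int (g : Z -> R) x y A n : x <= y ->
  (forall k, 0 <= g k <= 1) -> (forall k, 0 < g k -> x < IZR k < y) ->
  ZS g A n <= y - x + 1.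
Proof.
  intros hxy hg hs.
  set (F := fun z : Z => clamp (y - x + 1) (IZR z - x)).
  assert (Hb : forall k, g k <= F (k + 1)%Z - F k).
  { intro k. unfold F. rewrite plus_IZR.
    destruct (Rlt_or_le 0 (g k)) as [h|h].
    - specialize (hs k h). rewrite !clamp_id by lra. pose proof (hg k). lra.
    - pose proof (clamp_mono (y - x + 1) (IZR k - x) (IZR k + 1 - x) ltac:(lra) ltac:(lra)). lra. }
  eapply Rle_trans. apply ZS_le with (U := fun k => F (k + 1)%Z - F k). intros; apply Hb.
  rewrite ZS_telescope. unfold F.
  pose proof (clamp_range (y - x + 1) (IZR (A + Z.of_nat n) - x) ltac:(lra)).
  pose proof (clamp_range (y - x + 1) (IZR A - x) ltac:(lra)). lra.
Qed.

Fixpoint lsum (D : list R) (g : R -> R) : R :=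
  match D with nil => 0 | d :: D' => g d + lsum D' g end.

Lemma lsum_le D g h : (forall d, In d D -> g d <= h d) -> lsum D g <= lsum D h.
Proof.
  induction D as [|d D IH]; simpl; intros H. lra.
  apply Rplus_le_compat. apply H; auto. apply IH; auto.
Qed.

Lemma lsum_const D a : lsum D (fun _ => a) = INR (length D) * a.
Proof. induction D; simpl lsum. simpl; ring. rewrite IHD. simpl length. rewrite S_INR. ring. Qed.

Lemma lsum_nonneg D g : (forall d, 0 <= g d) -> 0 <= lsum D g.
Proof. induction D; simpl; intros. lra. specialize (IHD H). specialize (H a). lra. Qed.

Lemma lsum_ge D g d : (forall d, 0 <= g d) -> In d D -> g d <= lsum D g.
Proof.
  induction D as [|d' D IH]; simpl; intros H i. tauto.
  destruct i as [->|i]. pose proof (lsum_nonneg D g H). lra.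
  specialize (IH H i). specialize (H d'). lra.
Qed.

Lemma ZS_lsum D (g : R -> Z -> R) A n : ZS (fun k => lsum D (fun d => g d k)) A n = lsum D (fun d => ZS (g d) A n).
Proof.
  induction D as [|d D IH]; simpl.
  - rewrite ZS_const. ring.
  - rewrite ZS_plus. rewrite IH. reflexivity.
Qed.

Lemma ek_phi p M c k : 0 < M -> ek p M c k = - phi (M * Pk p M c k) / M.
Proof. intros. unfold ek, phi. field. lra. Qed.

Lemma Pk_upper p M c k B : dens_ok p -> 0 < M -> (forall x, lo M c k <= x <= lo M c (k + 1) -> p x <= B) ->
  Pk p M c k <= B / M.
Proof.
  intros [h1 [h2 h3]] HM H. unfold Pk.
  pose proof (lo_lt M c k HM).
  apply Rle_trans with (RInt (fun _ => B) (lo M c k) (lo M c (k + 1))).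
  apply RInt_le; auto. lra. apply h2; lra. apply Ig_const.
  rewrite RInt_const. rewrite lo_S by auto. right. field. lra.
Qed.

Lemma bin_bad p M c k B : dens_ok p -> 0 < M -> locint (fun x => phi (p x)) -> 1 <= B ->
  (forall x, lo M c k <= x <= lo M c (k + 1) -> p x <= B) ->
  ek p M c k + fk p M c k <= 2 * (1 + B * ln B) / M.
Proof.
  intros D HM Ip HB H. pose proof D as [h1 [h2 h3]].
  pose proof (lo_lt M c k HM).
  set (C := 1 + B * ln B).
  assert (fk p M c k <= C / M).
  { unfold fk. apply Rle_trans with (RInt (fun _ => C) (lo M c k) (lo M c (k + 1))).
    apply RInt_le; auto. lra. apply Ip; lra. apply Ig_const.
    intros x hx. pose proof (phi_abs_B (p x) B HB (conj (h1 x) (H x hx))). apply Rabs_le_inv in H1. unfold C; lra.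
    rewrite RInt_const. rewrite lo_S by auto. right. field. lra. }
  rewrite ek_phi by auto.
  pose proof (Pk_upper p M c k B D HM H). pose proof (Pk_nonneg p M c k D HM).
  assert (0 <= M * Pk p M c k <= B).
  { split. apply Rmult_le_pos; lra. apply Rle_trans with (M * (B / M)). apply Rmult_le_compat_l; lra. right; field; lra. }
  pose proof (phi_abs_B _ B HB H4) as H5. apply Rabs_le_inv in H5.
  assert (- phi (M * Pk p M c k) / M <= C / M).
  { unfold Rdiv. apply Rmult_le_compat_r. left; apply Rinv_0_lt_compat; auto. unfold C; lra. }
  replace (2 * (1 + B * ln B) / M) with (C / M + C / M) by (unfold C; field; lra). lra.
Qed.

Lemma bin_good p M c k B eps1 eta1 : dens_ok p -> 0 < M -> locint (fun x => phi (p x)) -> 1 <= B ->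
  (forall x, lo M c k <= x <= lo M c (k + 1) -> p x <= B) ->
  (forall s t, 0 <= s <= B -> 0 <= t <= B -> Rabs (s - t) <= eps1 -> Rabs (phi s - phi t) <= eta1) ->
  (forall x y, lo M c k <= x <= lo M c (k + 1) -> lo M c k <= y <= lo M c (k + 1) -> Rabs (p x - p y) <= eps1) ->
  ek p M c k + fk p M c k <= eta1 / M.
Proof.
  intros D HM Ip HB H Hphi Hosc. pose proof D as [h1 [h2 h3]].
  pose proof (lo_lt M c k HM) as ll.
  set (u := lo M c k) in *. set (v := lo M c (k + 1)) in *.
  assert (vu : v - u = / M) by (unfold u, v; rewrite lo_S; auto; ring).
  set (a := M * Pk p M c k).
  assert (aB : 0 <= a <= B).
  { pose proof (Pk_upper p M c k B D HM H). pose proof (Pk_nonneg p M c k D HM).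
    split. apply Rmult_le_pos; lra. apply Rle_trans with (M * (B / M)). apply Rmult_le_compat_l; lra. right; field; lra. }
  assert (near : forall x, u <= x <= v -> Rabs (p x - a) <= eps1).
  { intros x hx.
    assert (lb : (p x - eps1) * (v - u) <= Pk p M c k).
    { unfold Pk. fold u v. rewrite <- RInt_const. apply RInt_le. lra. apply Ig_const. apply h2; lra.
      intros y hy. pose proof (Hosc x y hx hy). apply Rabs_le_inv in H0. lra. }
    assert (ub : Pk p M c k <= (p x + eps1) * (v - u)).
    { unfold Pk. fold u v. rewrite <- RInt_const. apply RInt_le. lra. apply h2; lra. apply Ig_const.
      intros y hy. pose proof (Hosc x y hx hy). apply Rabs_le_inv in H0. lra. }
    rewrite vu in lb, ub.
    apply (Rmult_le_compat_l M) in lb; [|lra]. apply (Rmult_le_compat_l M) in ub; [|lra].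
    replace (M * ((p x - eps1) * / M)) with (p x - eps1) in lb by (field; lra).
    replace (M * ((p x + eps1) * / M)) with (p x + eps1) in ub by (field; lra).
    fold a in lb, ub. apply Rabs_le. lra. }
  assert (fk p M c k <= (phi a + eta1) / M).
  { unfold fk. fold u v. apply Rle_trans with (RInt (fun _ => phi a + eta1) u v).
    apply RInt_le. lra. apply Ip; lra. apply Ig_const.
    intros x hx. pose proof (Hphi (p x) a (conj (h1 x) (H x hx)) aB (near x hx)). apply Rabs_le_inv in H0. lra.
    rewrite RInt_const, vu. right. field. lra. }
  rewrite ek_phi by auto. fold a.
  replace (eta1 / M) with (- phi a / M + (phi a + eta1) / M) by (field; lra). lra.
Qed.

Definition indb (M c rho d : R) (k : Z) : R :=
  if Rlt_dec (lo M c k) (d + rho) then (if Rlt_dec (d - rho) (lo M c (k + 1)) then 1 else 0) else 0.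

Lemma indb_range M c rho d k : 0 <= indb M c rho d k <= 1.
Proof. unfold indb. destruct (Rlt_dec _ _); [destruct (Rlt_dec _ _)|]; lra. Qed.

Lemma indb_count M c rho d A n : 0 < M -> 0 < rho -> ZS (indb M c rho d) A n <= 2 * rho * M + 2.
Proof.
  intros HM hr.
  replace (2 * rho * M + 2) with ((M * (d + rho + c) + /2) - (M * (d - rho + c) - /2) + 1) by field.
  apply count_int. nra. apply indb_range.
  intros k hk. unfold indb in hk.
  destruct (Rlt_dec (lo M c k) (d + rho)) as [h1|h1]; [|lra].
  destruct (Rlt_dec (d - rho) (lo M c (k + 1))) as [h2|h2]; [|lra].
  unfold lo in h1, h2. rewrite plus_IZR in h2.
  split.
  - apply (Rmult_lt_compat_l M) in h2; auto.
    replace (M * ((IZR k + 1 - / 2) / M - c)) with (IZR k + /2 - M * c) in h2 by (field; lra). nra.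
  - apply (Rmult_lt_compat_l M) in h1; auto.
    replace (M * ((IZR k - / 2) / M - c)) with (IZR k - /2 - M * c) in h1 by (field; lra). nra.
Qed.

Lemma mid_bound p L R1 eta :
  dens_ok p ->
  (forall a b, a < b -> exists D : list R, forall x, a < x < b -> ~ In x D -> continuity_pt p x) ->
  (forall x, continuity_pt p x -> p x <= L) ->
  locint (fun x => phi (p x)) -> 0 <= R1 -> 0 < eta ->
  exists m0 : nat, (1 <= m0)%nat /\ forall m c kL n, (m0 <= m)%nat ->
    - R1 <= lo (INR m) c kL -> lo (INR m) c (kL + Z.of_nat n) <= R1 ->
    ZS (fun k => ek p (INR m) c k + fk p (INR m) c k) kL n <= eta.
Proof.
  intros Dn PC EB Ip hR he. pose proof Dn as [d1 [d2 d3]].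
  destruct (PC (- R1 - 1) (R1 + 1) ltac:(lra)) as [D HD].
  set (B := Rmax 1 (Rmax L (maxl (map p D)))).
  assert (HB1 : 1 <= B) by apply Rmax_1.
  assert (HBx : forall x, - R1 <= x <= R1 -> p x <= B).
  { intros x hx. apply (p_bound_D p L (- R1 - 1) (R1 + 1) D d1 EB HD). lra. }
  set (C := 1 + B * ln B).
  assert (C1 : 1 <= C) by (unfold C; pose proof (ln_nonneg B HB1); nra).
  set (eta1 := eta / (2 * (2 * R1 + 1))).
  assert (e1p : 0 < eta1) by (unfold eta1; apply Rdiv_lt_0_compat; lra).
  destruct (gB_unif B HB1 eta1 e1p) as [del [delp Hdel]].
  set (eps1 := del / 2).
  assert (Hphi : forall s t, 0 <= s <= B -> 0 <= t <= B -> Rabs (s - t) <= eps1 -> Rabs (phi s - phi t) <= eta1).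
  { intros s t hs ht hst. rewrite <- (clamp_id B s hs), <- (clamp_id B t ht). apply Hdel. unfold eps1 in hst; lra. }
  set (nD := INR (length D)).
  assert (nD0 : 0 <= nD) by apply pos_INR.
  set (rho := eta / (16 * C * (nD + 1))).
  assert (rp : 0 < rho) by (unfold rho; apply Rdiv_lt_0_compat; [lra|]; apply Rmult_lt_0_compat; lra).
  assert (HDc : forall x, - R1 - 1 < x < R1 + 1 -> ~ In x D -> continuity_pt p x) by auto.
  destruct (p_unif_K p R1 rho D rp HDc eps1 ltac:(unfold eps1; lra)) as [dl [dlp Hdl]].
  destruct (nat_big (Rmax 1 (Rmax (2 / dl) (16 * C * (nD + 1) / eta)))) as [m0 Hm0].
  assert (m0a : 1 <= INR m0) by (eapply Rle_trans; [apply Rmax_l|exact Hm0]).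
  assert (m0b : 2 / dl <= INR m0) by (eapply Rle_trans; [|exact Hm0]; eapply Rle_trans; [apply Rmax_l|apply Rmax_r]).
  assert (m0c : 16 * C * (nD + 1) / eta <= INR m0) by (eapply Rle_trans; [|exact Hm0]; eapply Rle_trans; [apply Rmax_r|apply Rmax_r]).
  exists m0. split. { destruct m0. simpl in m0a; lra. lia. }
  intros m c kL n hm h1 h2.
  set (M := INR m).
  assert (HMm : INR m0 <= M) by (apply le_INR; auto).
  assert (HM : 0 < M) by lra.
  assert (invM : / M < dl).
  { apply Rle_lt_trans with (/ INR m0). apply Rinv_le_contravar; lra.
    assert (2 / dl <= INR m0) by auto. apply (Rmult_le_compat_r dl) in H; [|lra].
    replace (2 / dl * dl) with 2 in H by (field; lra).
    apply (Rmult_lt_reg_r (INR m0)). lra. rewrite Rinv_l by lra. nra. }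
  assert (perbin : forall i, (i < n)%nat ->
    ek p M c (kL + Z.of_nat i) + fk p M c (kL + Z.of_nat i) <=
    eta1 / M + 2 * C / M * lsum D (fun d => indb M c rho d (kL + Z.of_nat i))).
  { intros i hi. set (k := (kL + Z.of_nat i)%Z).
    assert (lk1 : - R1 <= lo M c k) by (unfold k; eapply Rle_trans; [exact h1|apply lo_mono; auto]).
    assert (lk2 : lo M c (k + 1) <= R1).
    { eapply Rle_trans; [|exact h2]. replace (kL + Z.of_nat n)%Z with (k + 1 + Z.of_nat (n - i - 1))%Z by (unfold k; lia).
      apply lo_mono; auto. }
    assert (hBk : forall x, lo M c k <= x <= lo M c (k + 1) -> p x <= B) by (intros; apply HBx; lra).
    assert (e1M : 0 <= eta1 / M) by (apply div_nonneg; lra).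
    destruct (classic (exists d, In d D /\ indb M c rho d k = 1)) as [[d [hd hi1]]|nex].
    - pose proof (bin_bad p M c k B Dn HM Ip HB1 hBk). fold C in H.
      pose proof (lsum_ge D (fun d => indb M c rho d k) d (fun d => proj1 (indb_range M c rho d k)) hd).
      simpl in H0. rewrite hi1 in H0.
      assert (2 * C / M * 1 <= 2 * C / M * lsum D (fun d => indb M c rho d k)).
      { apply Rmult_le_compat_l; auto. apply div_nonneg; lra. }
      replace (2 * C / M) with (2 * C / M * 1) by ring. lra.
    - assert (inK : forall x, lo M c k <= x <= lo M c (k + 1) -> Kset R1 rho D x).
      { intros x hx. split. lra. intros d hd.
        destruct (Rle_or_lt rho (Rabs (x - d))) as [ok|bad]; auto. exfalso. apply nex. exists d. split; auto.
        apply Rabs_def2 in bad. unfold indb.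
        destruct (Rlt_dec (lo M c k) (d + rho)); [|lra].
        destruct (Rlt_dec (d - rho) (lo M c (k + 1))); [|lra]. auto. }
      pose proof (lsum_nonneg D (fun d => indb M c rho d k) (fun d => proj1 (indb_range M c rho d k))).
      assert (0 <= 2 * C / M * lsum D (fun d => indb M c rho d k)) by (apply Rmult_le_pos; auto; apply div_nonneg; lra).
      assert (ek p M c k + fk p M c k <= eta1 / M).
      { apply (bin_good p M c k B eps1 eta1); auto.
        intros x y hx hy. left. apply Hdl; auto.
        rewrite lo_S in hx, hy by auto. apply Rabs_def1; lra. }
      lra. }
  eapply Rle_trans. apply ZS_le with (U := fun k => eta1 / M + 2 * C / M * lsum D (fun d => indb M c rho d k)). exact perbin.
  rewrite ZS_plus, ZS_const, ZS_scal, ZS_lsum.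
  assert (cnt : lsum D (fun d => ZS (indb M c rho d) kL n) <= nD * (2 * rho * M + 2)).
  { unfold nD. rewrite <- lsum_const. apply lsum_le. intros d _. apply indb_count; auto. }
  assert (nM : INR n / M <= 2 * R1).
  { rewrite lo_add in h2 by auto. fold M in h1, h2. lra. }
  assert (A1 : INR n * (eta1 / M) <= eta / 2).
  { replace (INR n * (eta1 / M)) with (INR n / M * eta1) by (field; lra).
    apply Rle_trans with (2 * R1 * eta1). apply Rmult_le_compat_r; lra.
    unfold eta1. apply Rle_trans with ((2 * R1 + 1) * (eta / (2 * (2 * R1 + 1)))).
    apply Rmult_le_compat_r. left; apply Rdiv_lt_0_compat; lra. lra. right; field; lra. }
  assert (A2 : 2 * C / M * lsum D (fun d => ZS (indb M c rho d) kL n) <= 2 * C / M * (nD * (2 * rho * M + 2))).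
  { apply Rmult_le_compat_l; auto. apply div_nonneg; lra. }
  assert (A3 : 2 * C / M * (nD * (2 * rho * M + 2)) = 4 * C * nD * rho + 4 * C * nD / M) by (field; lra).
  assert (A4 : 4 * C * nD * rho <= eta / 4).
  { unfold rho. replace (4 * C * nD * (eta / (16 * C * (nD + 1)))) with (eta / 4 * (nD / (nD + 1))) by (field; lra).
    rewrite <- (Rmult_1_r (eta / 4)) at 2. apply Rmult_le_compat_l. lra.
    apply (Rmult_le_reg_r (nD + 1)). lra. unfold Rdiv. rewrite Rmult_assoc, Rinv_l by lra. lra. }
  assert (A5 : 4 * C * nD / M <= eta / 4).
  { apply (Rmult_le_reg_r M). auto. unfold Rdiv. rewrite Rmult_assoc, Rinv_l by lra.
    assert (16 * C * (nD + 1) / eta <= M) by lra.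
    apply (Rmult_le_compat_r eta) in H; [|lra]. replace (16 * C * (nD + 1) / eta * eta) with (16 * C * (nD + 1)) in H by (field; lra).
    nra. }
  lra.
Qed.

Lemma crude_bound p L R1 :
  dens_ok p ->
  (forall a b, a < b -> exists D : list R, forall x, a < x < b -> ~ In x D -> continuity_pt p x) ->
  (forall x, continuity_pt p x -> p x <= L) ->
  locint (fun x => phi (p x)) -> 0 <= R1 ->
  exists K, forall m c kL n, (1 <= m)%nat ->
    - R1 <= lo (INR m) c kL -> lo (INR m) c (kL + Z.of_nat n) <= R1 ->
    ZS (fun k => ek p (INR m) c k + fk p (INR m) c k) kL n <= K.
Proof.
  intros Dn PC EB Ip hR. pose proof Dn as [d1 [d2 d3]].
  destruct (PC (- R1 - 1) (R1 + 1) ltac:(lra)) as [D HD].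
  set (B := Rmax 1 (Rmax L (maxl (map p D)))).
  assert (HB1 : 1 <= B) by apply Rmax_1.
  assert (HBx : forall x, - R1 <= x <= R1 -> p x <= B).
  { intros x hx. apply (p_bound_D p L (- R1 - 1) (R1 + 1) D d1 EB HD). lra. }
  set (C := 1 + B * ln B).
  assert (C1 : 1 <= C) by (unfold C; pose proof (ln_nonneg B HB1); nra).
  exists (2 * C * (2 * R1)). intros m c kL n hm h1 h2.
  set (M := INR m). assert (HM : 0 < M) by (apply lt_0_INR; lia).
  fold M in h1, h2.
  eapply Rle_trans. apply ZS_le with (U := fun _ => 2 * C / M).
  { intros i hi. set (k := (kL + Z.of_nat i)%Z).
    assert (lk1 : - R1 <= lo M c k) by (unfold k; eapply Rle_trans; [exact h1|apply lo_mono; auto]).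
    assert (lk2 : lo M c (k + 1) <= R1).
    { eapply Rle_trans; [|exact h2]. replace (kL + Z.of_nat n)%Z with (k + 1 + Z.of_nat (n - i - 1))%Z by (unfold k; lia).
      apply lo_mono; auto. }
    apply bin_bad; auto. intros; apply HBx; lra. }
  rewrite ZS_const. rewrite lo_add in h2 by auto.
  replace (INR n * (2 * C / M)) with (2 * C * (INR n / M)) by (field; lra).
  apply Rmult_le_compat_l; lra.
Qed.

Lemma exists_bin M c x : 0 < M -> exists k, lo M c k <= x < lo M c (k + 1).
Proof.
  intros HM. set (z := M * (x + c) + /2). destruct (archimed z) as [a1 a2].
  exists (up z - 1)%Z. unfold lo. rewrite minus_IZR. rewrite plus_IZR, minus_IZR. split.
  - apply (Rmult_le_reg_l M); auto.
    replace (M * ((IZR (up z) - 1 - / 2) / M - c)) with (IZR (up z) - 1 - /2 - M * c) by (field; lra).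
    assert (zE : z = M * x + M * c + /2) by (unfold z; ring). lra.
  - apply (Rmult_lt_reg_l M); auto.
    replace (M * ((IZR (up z) - 1 + 1 - / 2) / M - c)) with (IZR (up z) - /2 - M * c) by (field; lra).
    assert (zE : z = M * x + M * c + /2) by (unfold z; ring). lra.
Qed.

Lemma lo_lt_inv M c a b : 0 < M -> lo M c a < lo M c b -> (a < b)%Z.
Proof.
  intros HM h. unfold lo in h. apply lt_IZR.
  apply (Rplus_lt_compat_r c) in h. unfold Rminus in h. rewrite !Rplus_assoc, Rplus_opp_l, !Rplus_0_r in h.
  apply (Rmult_lt_compat_l M) in h; auto.
  replace (M * ((IZR a + - / 2) / M)) with (IZR a - /2) in h by (field; lra).
  replace (M * ((IZR b + - / 2) / M)) with (IZR b - /2) in h by (field; lra). lra.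
Qed.

Lemma lo_le_inv M c a b : 0 < M -> lo M c a <= lo M c b -> (a <= b)%Z.
Proof.
  intros HM h. destruct (Z_le_gt_dec a b) as [ok|bad]; auto. exfalso.
  assert (lo M c b < lo M c a).
  { replace a with (b + Z.of_nat (Z.to_nat (a - b - 1)) + 1)%Z by lia.
    eapply Rle_lt_trans. apply lo_mono with (n := Z.to_nat (a - b - 1)); auto. apply lo_lt; auto. }
  lra.
Qed.

Lemma lo_diff M c a b : 0 < M -> (a <= b)%Z -> lo M c b = lo M c a + INR (Z.to_nat (b - a)) / M.
Proof. intros. rewrite <- lo_add by auto. f_equal. lia. Qed.

Lemma decomp p m c h delta epsQ Kmid (N J : nat) A n :
  dens_ok p -> (1 <= m)%nat ->
  (forall j0 n', ((Z.of_nat J <= j0)%Z \/ (j0 + Z.of_nat n' <= - Z.of_nat J)%Z) -> ZS (psiQ p) j0 n' <= epsQ) ->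
  (J + 1 <= N)%nat ->
  (forall u v, u <= v -> (INR N - 1 <= u \/ v <= - (INR N - 1)) -> RInt p u v <= /4) ->
  (forall kL' n', - (INR N + 1) <= lo (INR m) c kL' -> lo (INR m) c (kL' + Z.of_nat n') <= INR N + 1 ->
     ZS (fun k => ek p (INR m) c k + fk p (INR m) c k) kL' n' <= Kmid) ->
  (forall u v, u <= - INR N -> INR N <= v -> - RInt (fun x => phi (p x)) u v <= h + delta) ->
  locint (fun x => phi (p x)) ->
  lo (INR m) c A <= - INR N - 1 -> INR N + 1 <= lo (INR m) c (A + Z.of_nat n) ->
  ZS (ek p (INR m) c) A n <= 4 * epsQ + Kmid + h + delta.
Proof.
  intros Dn hm HJ hNJ Hmass Hmid Hint Ip hA hB.
  pose proof Dn as [d1 [d2 d3]].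
  set (M := INR m) in *. assert (HM : 0 < M) by (apply lt_0_INR; lia).
  assert (M1 : 1 <= M) by (apply (le_INR 1) in hm; simpl in hm; unfold M; lra).
  assert (iM : / M <= 1) by (rewrite <- Rinv_1; apply Rinv_le_contravar; lra).
  set (R := INR N) in *.
  assert (R0 : 1 <= R) by (unfold R; apply (le_INR 1); lia).
  destruct (exists_bin M c (- R) HM) as [kL [hL1 hL2]].
  destruct (exists_bin M c R HM) as [k' [hR1 hR2]].
  set (kR := (k' + 1)%Z).
  rewrite lo_S in hL2, hR2 by auto.
  assert (hR3 : R < lo M c kR) by (unfold kR; rewrite lo_S by auto; lra).
  assert (hR4 : lo M c kR <= R + 1) by (unfold kR; rewrite lo_S by auto; lra).
  assert (AkL : (A <= kL)%Z) by (apply (lo_le_inv M c); auto; lra).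
  assert (kLkR : (kL <= kR)%Z) by (apply (lo_le_inv M c); auto; lra).
  assert (kRB : (kR <= A + Z.of_nat n)%Z) by (apply (lo_le_inv M c); auto; lra).
  set (nL := Z.to_nat (kL - A)). set (nM := Z.to_nat (kR - kL)). set (nR := Z.to_nat (A + Z.of_nat n - kR)).
  assert (En : n = (nL + (nM + nR))%nat) by (unfold nL, nM, nR; lia).
  assert (EkL : (A + Z.of_nat nL)%Z = kL) by (unfold nL; lia).
  assert (EkR : (kL + Z.of_nat nM)%Z = kR) by (unfold nM; lia).
  rewrite En, ZS_add, ZS_add, EkL, EkR.
  assert (LT : ZS (ek p M c) A nL <= 2 * epsQ).
  { destruct (exists_bin 1 0 (lo M c kL) Rlt_0_1) as [j [hj1 hj2]].
    unfold lo in hj1, hj2. rewrite plus_IZR in hj2.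
    replace ((IZR j - / 2) / 1 - 0) with (IZR j - /2) in hj1 by field.
    replace ((IZR j + 1 - / 2) / 1 - 0) with (IZR j + /2) in hj2 by field.
    fold (lo M c kL) in hj1, hj2.
    assert (jle : (j <= - Z.of_nat N)%Z).
    { assert (IZR j < IZR (- Z.of_nat N + 1)) by (rewrite plus_IZR, opp_IZR, <- INR_IZR_INZ; fold R; lra).
      apply lt_IZR in H. lia. }
    rewrite (Nat.div_mod_eq nL m). rewrite (Nat.add_comm (m * (nL / m))), (Nat.mul_comm m).
    set (q := (nL / m)%nat). set (r := (nL mod m)%nat).
    assert (rm : (r < m)%nat) by (apply Nat.mod_upper_bound; lia).
    assert (EE : (A + Z.of_nat (r + q * m))%Z = kL).
    { unfold r, q. rewrite Nat.mul_comm, <- (Nat.add_comm (m * (nL / m))), <- Nat.div_mod_eq. auto. }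
    eapply Rle_trans. apply (left_tail p m c Dn hm q A r j); auto. lia.
    rewrite EE. fold M. lra. rewrite EE. fold M. lra.
    { intros j' hj'. replace (Qc p j') with (Qc p (j' - 1 + 1)) by (f_equal; lia).
      rewrite Qc2 by auto. apply Hmass. lra. right.
      apply IZR_le in hj'. apply IZR_le in jle. rewrite opp_IZR, <- INR_IZR_INZ in jle. fold R in jle. rewrite minus_IZR. lra. }
    assert (ZS (psiQ p) (j - Z.of_nat q - 1) (S q) <= epsQ) by (apply HJ; right; rewrite Nat2Z.inj_succ; lia).
    assert (ZS (psiQ p) (j - Z.of_nat q) (S q) <= epsQ) by (apply HJ; right; rewrite Nat2Z.inj_succ; lia).
    lra. }
  assert (RT : ZS (ek p M c) kR nR <= 2 * epsQ).
  { destruct (exists_bin 1 0 (lo M c kR) Rlt_0_1) as [j [hj1 hj2]].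
    unfold lo in hj1, hj2. rewrite plus_IZR in hj2.
    replace ((IZR j - / 2) / 1 - 0) with (IZR j - /2) in hj1 by field.
    replace ((IZR j + 1 - / 2) / 1 - 0) with (IZR j + /2) in hj2 by field.
    fold (lo M c kR) in hj1, hj2.
    assert (jge : (Z.of_nat N <= j)%Z).
    { destruct (Z_le_gt_dec (Z.of_nat N) j) as [ok|bad]; auto.
      exfalso. assert (IZR j <= IZR (Z.of_nat N - 1)) by (apply IZR_le; lia).
      rewrite minus_IZR, <- INR_IZR_INZ in H. fold R in H. lra. }
    rewrite (Nat.div_mod_eq nR m). rewrite (Nat.mul_comm m).
    set (q := (nR / m)%nat). set (r := (nR mod m)%nat).
    assert (rm : (r < m)%nat) by (apply Nat.mod_upper_bound; lia).
    eapply Rle_trans. apply (right_tail p m c Dn hm q kR r j); auto. lia. fold M. lra.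
    { intros j' hj'. rewrite Qc2 by auto. apply Hmass. lra. left.
      apply IZR_le in hj'. apply IZR_le in jge. rewrite <- INR_IZR_INZ in jge. fold R in jge. lra. }
    assert (ZS (psiQ p) j (S q) <= epsQ) by (apply HJ; left; lia).
    assert (ZS (psiQ p) (j + 1) (S q) <= epsQ) by (apply HJ; left; lia).
    lra. }
  assert (MT : ZS (ek p M c) kL nM <= Kmid + h + delta).
  { assert (E1 : ZS (ek p M c) kL nM = ZS (fun k => ek p M c k + fk p M c k) kL nM - ZS (fk p M c) kL nM).
    { rewrite ZS_plus. ring. }
    assert (E2 : ZS (fk p M c) kL nM = RInt (fun x => phi (p x)) (lo M c kL) (lo M c kR)).
    { unfold fk. rewrite ZS_bin by auto. rewrite EkR. auto. }
    assert (B1 : ZS (fun k => ek p M c k + fk p M c k) kL nM <= Kmid).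
    { apply Hmid. fold M. lra. fold M. rewrite EkR. lra. }
    assert (B2 : - RInt (fun x => phi (p x)) (lo M c kL) (lo M c kR) <= h + delta).
    { apply Hint; fold R; lra. }
    lra. }
  lra.
Qed.

Lemma RInt_pt f a : RInt f a a = 0.
Proof. rewrite (RInt_eq _ _ _ (RiemannInt_P7 f a)). apply RiemannInt_P9. Qed.

Lemma mass_tail p (N1 : nat) u v : dens_ok p -> u <= v -> (INR N1 <= u \/ v <= - INR N1) ->
  RInt p u v <= 1 - Gf p N1.
Proof.
  intros Dn huv H. pose proof Dn as [d1 [d2 d3]]. pose proof (pos_INR N1).
  destruct H as [H|H].
  - pose proof (RInt_outside p 1 N1 (- INR N1) v d2 d1 d3 (Rle_refl _) ltac:(lra)).
    rewrite RInt_pt in H1.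
    pose proof (RInt_mono_int p u v (INR N1) v d1 d2 H huv (Rle_refl _)). lra.
  - pose proof (RInt_outside p 1 N1 u (INR N1) d2 d1 d3 ltac:(lra) (Rle_refl _)).
    rewrite RInt_pt in H1.
    pose proof (RInt_mono_int p u v u (- INR N1) d1 d2 (Rle_refl _) huv H). lra.
Qed.

Lemma region_big M c R : 0 < M -> exists N0 : nat, forall N, (N0 <= N)%nat ->
  lo M c (- Z.of_nat (S N)) <= - R /\ R <= lo M c (- Z.of_nat (S N) + Z.of_nat (2 * S N)).
Proof.
  intros HM. destruct (nat_big (M * (Rabs R + Rabs c))) as [N0 HN0].
  exists N0. intros N hN. apply le_INR in hN.
  pose proof (Rabs_pos R). pose proof (Rabs_pos c). pose proof (Rle_abs R). pose proof (Rle_abs c).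
  pose proof (Rle_abs (- R)). pose proof (Rle_abs (- c)). rewrite Rabs_Ropp in H3, H4.
  assert (M * (Rabs R + Rabs c) <= INR N) by lra.
  unfold lo. split.
  - rewrite opp_IZR, <- INR_IZR_INZ, S_INR.
    apply (Rmult_le_reg_l M); auto.
    replace (M * ((- (INR N + 1) - / 2) / M - c)) with (- INR N - 1 - /2 - M * c) by (field; lra).
    assert (M * (- c) <= M * Rabs c) by (apply Rmult_le_compat_l; lra).
    assert (M * R <= M * Rabs R) by (apply Rmult_le_compat_l; lra).
    nra.
  - replace (- Z.of_nat (S N) + Z.of_nat (2 * S N))%Z with (Z.of_nat (S N)) by lia.
    rewrite <- INR_IZR_INZ, S_INR.
    apply (Rmult_le_reg_l M); auto.
    replace (M * ((INR N + 1 - / 2) / M - c)) with (INR N + 1 - /2 - M * c) by (field; lra).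
    assert (M * c <= M * Rabs c) by (apply Rmult_le_compat_l; lra).
    assert (M * R <= M * Rabs R) by (apply Rmult_le_compat_l; lra).
    nra.
Qed.

Lemma s_decomp p M c A n : dens_ok p -> 0 < M ->
  ZS (ent_term (Pk p M c)) A n = ZS (ek p M c) A n + ln M * RInt p (lo M c A) (lo M c (A + Z.of_nat n)).
Proof.
  intros Dn HM. pose proof Dn as [d1 [d2 d3]].
  rewrite (ZS_ext _ (fun k => ek p M c k + ln M * Pk p M c k)).
  rewrite ZS_plus, ZS_scal. unfold Pk. rewrite ZS_bin by auto. reflexivity.
  intro k. rewrite ent_decomp by auto. ring.
Qed.

Lemma ZS_ek_lower p M c A n : dens_ok p -> 0 < M -> locint (fun x => phi (p x)) ->
  - RInt (fun x => phi (p x)) (lo M c A) (lo M c (A + Z.of_nat n)) <= ZS (ek p M c) A n.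
Proof.
  intros Dn HM Ip.
  assert (0 <= ZS (fun k => ek p M c k + fk p M c k) A n).
  { apply ZS_nonneg. intro k. apply jensen; auto. }
  rewrite ZS_plus in H. unfold fk in H. rewrite ZS_bin in H by auto. lra.
Qed.

Lemma locint_of p : locally_integrable p -> locint p.
Proof. intros H a b hab. destruct (H a b hab) as [v [pr _]]. constructor; exact pr. Qed.

Lemma locally_of p : locint p -> locally_integrable p.
Proof. intros H a b hab. destruct (H a b hab) as [pr]. exists (RiemannInt pr). exists pr. reflexivity. Qed.

Lemma Ip_of p L : dens_ok p ->
  (forall a b, a < b -> exists D : list R, forall x, a < x < b -> ~ In x D -> continuity_pt p x) ->
  (forall x, continuity_pt p x -> p x <= L) -> locint (fun x => phi (p x)).
Proof.
  intros [d1 [d2 d3]] PC EB a b hab.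
  destruct (PC (a - 1) (b + 1) ltac:(lra)) as [D HD].
  apply (Ig_phi p a b (Rmax 1 (Rmax L (maxl (map p D))))); auto. apply Rmax_1.
  intros x hx. apply (p_bound_D p L (a - 1) (b + 1) D d1 EB HD). lra.
Qed.

Lemma growing_s (T : Z -> R) : (forall k, 0 <= T k) ->
  Un_growing (fun N => sum_f_R0 (fun n => T (Z.of_nat n) + T (- Z.of_nat n - 1)%Z) N).
Proof. intros H N. rewrite tech5. pose proof (H (Z.of_nat (S N))). pose proof (H (- Z.of_nat (S N) - 1)%Z). lra. Qed.

Lemma Un_cv_infinite_sum s l : Un_cv (fun N => sum_f_R0 s N) l -> infinite_sum s l.
Proof. intros H eps he. destruct (H eps he) as [N HN]. exists N. intros n hn. apply HN; auto. Qed.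

Lemma infinite_sum_Un_cv s l : infinite_sum s l -> Un_cv (fun N => sum_f_R0 s N) l.
Proof. intros H eps he. destruct (H eps he) as [N HN]. exists N. intros n hn. apply HN; auto. Qed.

Definition sm (p : R -> R) (M c : R) (N : nat) : R :=
  sum_f_R0 (fun n => ent_term (bin_prob p M c) (Z.of_nat n) + ent_term (bin_prob p M c) (- Z.of_nat n - 1)%Z) N.

Lemma sm_eq p M c N : dens_ok p -> 0 < M ->
  sm p M c N = ZS (ek p M c) (- Z.of_nat (S N)) (2 * S N) +
    ln M * RInt p (lo M c (- Z.of_nat (S N))) (lo M c (- Z.of_nat (S N) + Z.of_nat (2 * S N))).
Proof.
  intros Dn HM. unfold sm.
  rewrite (pair_sum (ent_term (bin_prob p M c))).
  rewrite <- s_decomp by auto. apply ZS_ext. intro k. unfold ent_term. rewrite bin_prob_Pk. reflexivity.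
Qed.

Lemma sm_growing p M c : dens_ok p -> 0 < M -> Un_growing (sm p M c).
Proof.
  intros Dn HM. unfold sm. apply growing_s. intro k. unfold ent_term at 1. rewrite bin_prob_Pk.
  apply (ent_nonneg p M c k Dn HM).
Qed.

Lemma upper_m p h Va (c : R) m epsQ (J N Nmass : nat) Kmid :
  dens_ok p -> locint (fun x => phi (p x)) -> (1 <= m)%nat ->
  (forall (N : nat) u v, u <= - INR N -> INR N <= v ->
     Rabs (RInt (fun x => phi (p x)) u v + h) <= Va - Gf (fun x => Rabs (phi (p x))) N) ->
  (forall j0 n', ((Z.of_nat J <= j0)%Z \/ (j0 + Z.of_nat n' <= - Z.of_nat J)%Z) -> ZS (psiQ p) j0 n' <= epsQ) ->
  (J + 1 <= N)%nat -> (Nmass + 1 <= N)%nat -> 1 - Gf p Nmass <= /4 ->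
  (forall kL' n', - (INR N + 1) <= lo (INR m) c kL' -> lo (INR m) c (kL' + Z.of_nat n') <= INR N + 1 ->
     ZS (fun k => ek p (INR m) c k + fk p (INR m) c k) kL' n' <= Kmid) ->
  exists N1, forall Np, (N1 <= Np)%nat ->
    sm p (INR m) c Np <= ln (INR m) + 4 * epsQ + Kmid + h + (Va - Gf (fun x => Rabs (phi (p x))) N).
Proof.
  intros Dn Ip hm Hab HJ hJ hM hmass Hmid. pose proof Dn as [d1 [d2 d3]].
  assert (HM : 0 < INR m) by (apply lt_0_INR; lia).
  assert (lnM : 0 <= ln (INR m)) by (apply ln_nonneg; apply (le_INR 1) in hm; simpl in hm; lra).
  destruct (region_big (INR m) c (INR N + 1) HM) as [N1 HN1].
  exists N1. intros Np hNp. destruct (HN1 Np hNp) as [r1 r2].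
  rewrite sm_eq by auto.
  assert (D : ZS (ek p (INR m) c) (- Z.of_nat (S Np)) (2 * S Np) <= 4 * epsQ + Kmid + h + (Va - Gf (fun x => Rabs (phi (p x))) N)).
  { apply (decomp p m c h _ epsQ Kmid N J); auto.
    - intros u v huv hu. apply Rle_trans with (1 - Gf p Nmass); auto.
      apply mass_tail; auto. apply le_INR in hM. rewrite plus_INR in hM. simpl in hM. lra.
    - intros u v hu hv. specialize (Hab N u v hu hv). apply Rabs_le_inv in Hab. lra.
    - lra. }
  assert (RInt p (lo (INR m) c (- Z.of_nat (S Np))) (lo (INR m) c (- Z.of_nat (S Np) + Z.of_nat (2 * S Np))) <= 1).
  { apply RInt_le_V; auto. apply lo_mono; auto. }
  assert (ln (INR m) * RInt p (lo (INR m) c (- Z.of_nat (S Np))) (lo (INR m) c (- Z.of_nat (S Np) + Z.of_nat (2 * S Np))) <= ln (INR m)).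
  { rewrite <- (Rmult_1_r (ln (INR m))) at 2. apply Rmult_le_compat_l; auto. }
  lra.
Qed.

Lemma lower_m p h Va c m (N : nat) :
  dens_ok p -> locint (fun x => phi (p x)) -> (1 <= m)%nat ->
  (forall (N : nat) u v, u <= - INR N -> INR N <= v ->
     Rabs (RInt (fun x => phi (p x)) u v + h) <= Va - Gf (fun x => Rabs (phi (p x))) N) ->
  exists N1, forall Np, (N1 <= Np)%nat ->
    h - (Va - Gf (fun x => Rabs (phi (p x))) N) + ln (INR m) * Gf p N <= sm p (INR m) c Np.
Proof.
  intros Dn Ip hm Hab. pose proof Dn as [d1 [d2 d3]].
  assert (HM : 0 < INR m) by (apply lt_0_INR; lia).
  assert (lnM : 0 <= ln (INR m)) by (apply ln_nonneg; apply (le_INR 1) in hm; simpl in hm; lra).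
  destruct (region_big (INR m) c (INR N) HM) as [N1 HN1].
  exists N1. intros Np hNp. destruct (HN1 Np hNp) as [r1 r2].
  rewrite sm_eq by auto.
  pose proof (ZS_ek_lower p (INR m) c (- Z.of_nat (S Np)) (2 * S Np) Dn HM Ip).
  specialize (Hab N _ _ r1 r2). apply Rabs_le_inv in Hab.
  assert (Gf p N <= RInt p (lo (INR m) c (- Z.of_nat (S Np))) (lo (INR m) c (- Z.of_nat (S Np) + Z.of_nat (2 * S Np)))).
  { unfold Gf. apply RInt_mono_int; auto. pose proof (pos_INR N). lra. }
  assert (ln (INR m) * Gf p N <= ln (INR m) * RInt p (lo (INR m) c (- Z.of_nat (S Np))) (lo (INR m) c (- Z.of_nat (S Np) + Z.of_nat (2 * S Np)))).
  { apply Rmult_le_compat_l; auto. }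
  lra.
Qed.

Theorem mainTheorem14 (p : R -> R) (c : nat -> R) :
  is_density p ->
  piecewise_continuous p ->
  (exists H1, H_quant_is p 1 0 H1) ->
  integrable_R (fun x => p x * Rabs (ln (p x))) ->
  ess_bounded p ->
  exists (h : R) (Hs : nat -> R),
    diff_entropy_is p h /\
    (forall m : nat, (1 <= m)%nat -> H_quant_is p (INR m) (c m) (Hs m)) /\
    Un_cv (fun m => Hs m - ln (INR m)) h.
Proof.
  intros [d1 [hli hcv]] [PC _] [H1 HH1] [Va [hli2 hcv2]] [L EB].
  assert (Dn : dens_ok p) by (split; [auto|split; [apply locint_of; auto|exact hcv]]).
  pose proof Dn as [_ [d2 d3]].
  assert (Ip := Ip_of p L Dn PC EB).
  set (ga := fun x => Rabs (phi (p x))).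
  assert (gaE : ga = (fun x => p x * Rabs (ln (p x)))).
  { apply functional_extensionality. intro x. unfold ga, phi. rewrite Rabs_mult, (Rabs_pos_eq (p x)); auto. }
  assert (habs : Un_cv (Gf ga) Va) by (rewrite gaE; exact hcv2).
  assert (gal : locint ga) by (intros a b hab; apply Ig_abs; auto).
  assert (gap : forall x, 0 <= ga x) by (intro; apply Rabs_pos).
  destruct (improper_abs (fun x => phi (p x)) Va Ip habs) as [I [HI Htl]].
  set (h := - I).
  assert (Hab : forall (N : nat) u v, u <= - INR N -> INR N <= v ->
     Rabs (RInt (fun x => phi (p x)) u v + h) <= Va - Gf (fun x => Rabs (phi (p x))) N).
  { intros N u v hu hv. unfold h. replace (RInt (fun x => phi (p x)) u v + - I) with (RInt (fun x => phi (p x)) u v - I) by ring.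
    apply Htl; auto. }
  assert (psiQ0 : forall j, 0 <= psiQ p j).
  { intro j. unfold psiQ. apply psi_nonneg. split. apply Qc_nonneg; auto. unfold Qc. apply RInt_le_V; auto. lra. }
  assert (HQ : infinite_sum (fun n => psiQ p (Z.of_nat n) + psiQ p (- Z.of_nat n - 1)%Z) H1).
  { unfold H_quant_is, disc_entropy_is in HH1.
    replace (fun n => psiQ p (Z.of_nat n) + psiQ p (- Z.of_nat n - 1)%Z) with
      (fun n => ent_term (bin_prob p 1 0) (Z.of_nat n) + ent_term (bin_prob p 1 0) (- Z.of_nat n - 1)%Z); auto.
    apply functional_extensionality. intro n. unfold ent_term, psiQ, phi. rewrite !bin_prob_Qc. reflexivity. }
  assert (Htail := tail_small (psiQ p) H1 psiQ0 HQ).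
  destruct (d3 (/4) ltac:(lra)) as [Nmass HNmass].
  assert (hmass : 1 - Gf p Nmass <= /4).
  { specialize (HNmass Nmass (le_n _)). unfold Rdist in HNmass. apply Rabs_def2 in HNmass. lra. }
  assert (Ex : forall m, (1 <= m)%nat -> exists V, H_quant_is p (INR m) (c m) V).
  { intros m hm. assert (HM : 0 < INR m) by (apply lt_0_INR; lia).
    destruct (Htail 1 Rlt_0_1) as [J HJ].
    set (N := (J + 1 + Nmass + 1)%nat).
    destruct (crude_bound p L (INR N + 1) Dn PC EB Ip ltac:(pose proof (pos_INR N); lra)) as [K HK].
    destruct (upper_m p h Va (c m) m 1 J N Nmass K Dn Ip hm Hab HJ ltac:(unfold N; lia) ltac:(unfold N; lia) hmass) as [N1 HN1].
    { intros; apply HK; auto. }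
    assert (ub : has_ub (sm p (INR m) (c m))).
    { exists (ln (INR m) + 4 * 1 + K + h + (Va - Gf (fun x => Rabs (phi (p x))) N)).
      intros x [i ->]. apply Rle_trans with (sm p (INR m) (c m) (max i N1)).
      apply tech9. apply sm_growing; auto. lia. apply HN1. lia. }
    destruct (growing_cv _ (sm_growing p (INR m) (c m) Dn HM) ub) as [V HV].
    exists V. apply Un_cv_infinite_sum. exact HV. }
  set (Hs := fun m => epsilon (inhabits 0) (fun V => H_quant_is p (INR m) (c m) V)).
  assert (HsP : forall m, (1 <= m)%nat -> H_quant_is p (INR m) (c m) (Hs m)).
  { intros m hm. unfold Hs. apply epsilon_spec. apply Ex; auto. }
  assert (HsC : forall m, (1 <= m)%nat -> Un_cv (sm p (INR m) (c m)) (Hs m)).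
  { intros m hm. apply infinite_sum_Un_cv. apply HsP; auto. }
  exists h, Hs. split; [|split; auto].
  - unfold diff_entropy_is. split. apply locally_of; auto.
    unfold h. rewrite Ropp_involutive. exact HI.
  - intros eps he.
    destruct (Htail (eps / 16) ltac:(lra)) as [J HJ].
    destruct (habs (eps / 4) ltac:(lra)) as [Nd HNd].
    assert (dl : forall N, (Nd <= N)%nat -> Va - Gf ga N <= eps / 4).
    { intros N hN. specialize (HNd Nd (le_n _)). unfold Rdist in HNd. apply Rabs_def2 in HNd.
      pose proof (Gf_mono ga Nd N gal gap hN). lra. }
    set (N := (J + 1 + Nmass + 1 + Nd)%nat).
    destruct (mid_bound p L (INR N + 1) (eps / 4) Dn PC EB Ip ltac:(pose proof (pos_INR N); lra) ltac:(lra)) as [m0 [hm0 Hm0]].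
    exists m0. intros m hm. assert (hm1 : (1 <= m)%nat) by lia.
    assert (HM : 0 < INR m) by (apply lt_0_INR; lia).
    assert (lnM : 0 <= ln (INR m)) by (apply ln_nonneg; apply (le_INR 1) in hm1; simpl in hm1; lra).
    destruct (upper_m p h Va (c m) m (eps / 16) J N Nmass (eps / 4) Dn Ip hm1 Hab HJ ltac:(unfold N; lia) ltac:(unfold N; lia) hmass) as [N1 HN1].
    { intros; apply Hm0; auto. }
    assert (UP : Hs m <= ln (INR m) + 4 * (eps / 16) + eps / 4 + h + eps / 4).
    { apply (lim_le_ev _ _ _ N1 (HsC m hm1)). intros Np hNp. specialize (HN1 Np hNp).
      assert (Va - Gf (fun x => Rabs (phi (p x))) N <= eps / 4) by (apply dl; unfold N; lia). lra. }
    set (e2 := eps / (4 * (ln (INR m) + 1))).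
    assert (e2p : 0 < e2) by (unfold e2; apply Rdiv_lt_0_compat; lra).
    destruct (d3 e2 e2p) as [Ng HNg].
    set (N' := (Ng + Nd)%nat).
    assert (G1 : 1 - e2 <= Gf p N').
    { specialize (HNg N' ltac:(unfold N'; lia)). unfold Rdist in HNg. apply Rabs_def2 in HNg. lra. }
    destruct (lower_m p h Va (c m) m N' Dn Ip hm1 Hab) as [N2 HN2].
    assert (LO : h - eps / 4 + (ln (INR m) - eps / 4) <= Hs m).
    { apply (lim_ge_ev _ _ _ N2 (HsC m hm1)). intros Np hNp. specialize (HN2 Np hNp).
      assert (Va - Gf (fun x => Rabs (phi (p x))) N' <= eps / 4) by (apply dl; unfold N'; lia).
      assert (ln (INR m) * (1 - e2) <= ln (INR m) * Gf p N') by (apply Rmult_le_compat_l; auto).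
      assert (ln (INR m) * e2 <= eps / 4).
      { unfold e2. replace (ln (INR m) * (eps / (4 * (ln (INR m) + 1)))) with (eps / 4 * (ln (INR m) / (ln (INR m) + 1))) by (field; lra).
        rewrite <- (Rmult_1_r (eps / 4)) at 2. apply Rmult_le_compat_l. lra.
        apply (Rmult_le_reg_r (ln (INR m) + 1)). lra. unfold Rdiv. rewrite Rmult_assoc, Rinv_l by lra. lra. }
      lra. }
    unfold Rdist. apply Rabs_def1; lra.
Qed.
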